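(* Let $g\colon(\mathbb R^+,0)\to(\mathbb R^+,0)$ be a germ of a $C^2$-smooth function such that $g(y)=y+R(y)$ with $R(y)=O(y^2)$, and let $h(x)=-\frac{1}{\ln x}$ (so $h^{-1}(y)=e^{-1/y}$). Then $H=h^{-1}\circ g\circ h$ (with $H(0)=0$) is $C^1$-smooth near $0$. Moreover, if $g$ depends on a parameter $\varepsilon$ and $g''$ is $C^1$-smooth in $\varepsilon$, then $H'$ is also $C^1$-smooth with respect to $\varepsilon$. *)

(* Defs.v *)
From Stdlib Require Export Reals.
Open Scope R_scope.

Definition I0 (d : R) : R -> Prop := fun y => 0 <= y /\ y < d.

(* f is C^1 on the set D with derivative f' (one-sided at boundary points):
   Stdlib's D_in is the derivative within D, continue_in is continuity within D. *)
Definition C1_on (D : R -> Prop) (f f' : R -> R) : Prop :=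
  (forall x, D x -> D_in f f' D x) /\ (forall x, D x -> continue_in f' D x).

Definition C2_on_with (D : R -> Prop) (f f1 f2 : R -> R) : Prop :=
  (forall x, D x -> D_in f f1 D x) /\
  (forall x, D x -> D_in f1 f2 D x) /\
  (forall x, D x -> continue_in f2 D x).

Definition bigO_sq (D : R -> Prop) (g : R -> R) : Prop :=
  exists C, forall y, D y -> Rabs (g y - y) <= C * y ^ 2.

Definition h (x : R) : R := - / ln x.
Definition hinv (y : R) : R := exp (- / y).

Definition conjH (g : R -> R) (x : R) : R :=
  if Req_EM_T x 0 then 0 else hinv (g (h x)).

Definition joint_cont_on (P D : R -> Prop) (F : R -> R -> R) : Prop :=
  forall e y, P e -> D y -> forall eps, 0 < eps -> exists eta, 0 < eta /\
    forall e' y', P e' -> D y' -> Rabs (e' - e) < eta -> Rabs (y' - y) < eta ->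
      Rabs (F e' y' - F e y) < eps.

(* Main.v *)
Require Import Defs.
From Stdlib Require Import Reals Lra Lia Classical ClassicalEpsilon FunctionalExtensionality.
From Coquelicot Require Import Coquelicot.
Open Scope R_scope.


Lemma ballR (x e y : R) : ball x e y <-> Rabs (y - x) < e.
Proof. reflexivity. Qed.

Lemma ball2 (e x e' x' eps : R) : ball (e,x) eps (e',x') <-> Rabs (e' - e) < eps /\ Rabs (x' - x) < eps.
Proof. reflexivity. Qed.

Lemma within_lim (f : R -> R) (D : R -> Prop) (x l : R) :
  (forall eps, 0 < eps -> exists eta, 0 < eta /\ forall x', D x' -> Rabs (x' - x) < eta -> Rabs (f x' - l) < eps)
  <-> filterlim f (within D (locally x)) (locally l).
Proof.
  split.
  - intros H. apply filterlim_locally. intros [eps Heps].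
    destruct (H eps Heps) as [eta [Heta H']].
    exists (mkposreal eta Heta). intros y Hy Dy. apply ballR. apply H'; auto.
  - intros H eps Heps. rewrite filterlim_locally in H.
    destruct (H (mkposreal eps Heps)) as [[eta Heta] H'].
    exists eta; split; auto. intros x' Dx' Hx'. apply (H' x' Hx' Dx').
Qed.

Lemma within2_lim (f : R * R -> R) (P D : R -> Prop) (e x l : R) :
  (forall eps, 0 < eps -> exists eta, 0 < eta /\ forall e' x', P e' -> D x' -> Rabs (e' - e) < eta -> Rabs (x' - x) < eta -> Rabs (f (e', x') - l) < eps)
  <-> filterlim f (within (fun z => P (fst z) /\ D (snd z)) (locally (e, x))) (locally l).
Proof.
  split.
  - intros H. apply filterlim_locally. intros [eps Heps].
    destruct (H eps Heps) as [eta [Heta H']].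
    exists (mkposreal eta Heta). intros [e' x'] Hy [Pe Dx]. apply ballR.
    destruct Hy as [H1 H2]. apply H'; auto.
  - intros H eps Heps. rewrite filterlim_locally in H.
    destruct (H (mkposreal eps Heps)) as [[eta Heta] H'].
    exists eta; split; auto. intros e' x' Pe Dx H1 H2. apply (H' (e', x')); simpl; auto.
    split; auto.
Qed.

Lemma lim_plus {T} {F : (T -> Prop) -> Prop} {FF : Filter F} (f g : T -> R) a b :
  filterlim f F (locally a) -> filterlim g F (locally b) ->
  filterlim (fun z => f z + g z) F (locally (a + b)).
Proof. intros Hf Hg. eapply filterlim_comp_2; eauto. apply (filterlim_plus a b). Qed.

Lemma lim_mult {T} {F : (T -> Prop) -> Prop} {FF : Filter F} (f g : T -> R) a b :
  filterlim f F (locally a) -> filterlim g F (locally b) ->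
  filterlim (fun z => f z * g z) F (locally (a * b)).
Proof. intros Hf Hg. eapply filterlim_comp_2; eauto. apply (filterlim_mult a b). Qed.

Lemma lim_cont {T} {F : (T -> Prop) -> Prop} {FF : Filter F} (f : T -> R) (phi : R -> R) a :
  filterlim f F (locally a) -> continuous phi a ->
  filterlim (fun z => phi (f z)) F (locally (phi a)).
Proof. intros Hf Hp. eapply filterlim_comp; eauto. Qed.

Lemma lim_const {T} {F : (T -> Prop) -> Prop} {FF : Filter F} (a : R) :
  filterlim (fun _ : T => a) F (locally a).
Proof. apply filterlim_const. Qed.

Lemma lim_inv {T} {F : (T -> Prop) -> Prop} {FF : Filter F} (f : T -> R) a :
  filterlim f F (locally a) -> a <> 0 -> filterlim (fun z => / f z) F (locally (/ a)).
Proof. intros Hf Ha. apply (lim_cont f (fun x => / x)); auto. apply continuous_Rinv; auto. Qed.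

Lemma lim_exp {T} {F : (T -> Prop) -> Prop} {FF : Filter F} (f : T -> R) a :
  filterlim f F (locally a) -> filterlim (fun z => exp (f z)) F (locally (exp a)).
Proof. intros Hf. apply (lim_cont f exp); auto. apply continuous_exp. Qed.



Lemma dpl_eql f x l l' : derivable_pt_lim f x l -> l = l' -> derivable_pt_lim f x l'.
Proof. intros H <-; auto. Qed.
Lemma dpl_ext f g x l : (forall t, f t = g t) -> derivable_pt_lim f x l -> derivable_pt_lim g x l.
Proof. intros E H. replace g with f; auto. apply functional_extensionality; auto. Qed.
Lemma dpl_plus f g x l1 l2 : derivable_pt_lim f x l1 -> derivable_pt_lim g x l2 -> derivable_pt_lim (fun t => f t + g t) x (l1 + l2).
Proof. intros H1 H2. exact (derivable_pt_lim_plus f g x l1 l2 H1 H2). Qed.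
Lemma dpl_minus f g x l1 l2 : derivable_pt_lim f x l1 -> derivable_pt_lim g x l2 -> derivable_pt_lim (fun t => f t - g t) x (l1 - l2).
Proof. intros H1 H2. exact (derivable_pt_lim_minus f g x l1 l2 H1 H2). Qed.
Lemma dpl_mult f g x l1 l2 : derivable_pt_lim f x l1 -> derivable_pt_lim g x l2 -> derivable_pt_lim (fun t => f t * g t) x (l1 * g x + f x * l2).
Proof. intros H1 H2. eapply dpl_eql. exact (derivable_pt_lim_mult f g x l1 l2 H1 H2). ring. Qed.
Lemma dpl_const a x : derivable_pt_lim (fun _ => a) x 0.
Proof. apply derivable_pt_lim_const. Qed.
Lemma dpl_id x : derivable_pt_lim (fun t => t) x 1.
Proof. apply derivable_pt_lim_id. Qed.
Lemma dpl_comp f g x l1 l2 : derivable_pt_lim f x l1 -> derivable_pt_lim g (f x) l2 -> derivable_pt_lim (fun t => g (f t)) x (l2 * l1).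
Proof. intros H1 H2. exact (derivable_pt_lim_comp f g x l1 l2 H1 H2). Qed.

Definition RC (f : R -> R) : Prop :=
  forall eps, 0 < eps -> exists eta, 0 < eta /\ forall t, 0 < t < eta -> Rabs (f t - f 0) < eps.

Lemma Din_interior f f' d x : 0 < x < d -> D_in f f' (I0 d) x -> derivable_pt_lim f x (f' x).
Proof.
  intros Hx H eps Heps. destruct (H eps Heps) as [alp [Halp H']].
  assert (Hd : 0 < Rmin alp (Rmin x (d - x))).
  { apply Rmin_pos; auto. apply Rmin_pos; lra. }
  exists (mkposreal _ Hd). intros hh Hh0 Hhd. simpl in Hhd.
  assert (Hb1 := Rmin_l alp (Rmin x (d - x))).
  assert (Hb2 := Rmin_r alp (Rmin x (d - x))).
  assert (Hb3 := Rmin_l x (d - x)). assert (Hb4 := Rmin_r x (d - x)).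
  assert (Hh: Rabs hh < alp) by lra.
  specialize (H' (x + hh)). simpl in H'. unfold R_dist in H'.
  replace (x + hh - x) with hh in H' by ring.
  apply H'. split; auto. split.
  - unfold I0. apply Rabs_def2 in Hhd. lra.
  - intro Hc. apply Hh0. lra.
Qed.

Lemma deriv_Din f f' D x : derivable_pt_lim f x (f' x) -> D_in f f' D x.
Proof.
  intros H eps Heps. destruct (H eps Heps) as [del Hdel].
  exists del. split. apply cond_pos. intros x' [[Dx Hne] Hd]. simpl in x', Hd. unfold R_dist in Hd.
  simpl. unfold R_dist.
  specialize (Hdel (x' - x)). replace (x + (x' - x)) with x' in Hdel by ring.
  apply Hdel; auto. lra.
Qed.

Lemma Din_cont f f' D x : D_in f f' D x -> continue_in f D x.
Proof.
  intros H eps Heps. destruct (H 1 Rlt_0_1) as [alp [Halp H']].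
  set (K := Rabs (f' x) + 1).
  assert (HK : 0 < K) by (unfold K; generalize (Rabs_pos (f' x)); lra).
  exists (Rmin alp (eps / K)). split.
  { apply Rmin_pos; auto. apply Rdiv_lt_0_compat; auto. }
  intros x' [[Dx Hne] Hd]. simpl in *. unfold R_dist in *.
  assert (Hb1 := Rmin_l alp (eps / K)). assert (Hb2 := Rmin_r alp (eps / K)).
  specialize (H' x'). simpl in H'. unfold R_dist in H'.
  assert (Hq : Rabs ((f x' - f x) / (x' - x) - f' x) < 1).
  { apply H'. split. split; auto. simpl. unfold R_dist. lra. }
  assert (Hne' : x' - x <> 0) by lra.
  replace (f x' - f x) with (((f x' - f x) / (x' - x)) * (x' - x)) by (field; auto).
  rewrite Rabs_mult.
  assert (Hq2 : Rabs ((f x' - f x) / (x' - x)) <= K).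
  { unfold K. replace ((f x' - f x) / (x' - x)) with (((f x' - f x) / (x' - x) - f' x) + f' x) by ring.
    eapply Rle_trans. apply Rabs_triang. lra. }
  apply Rle_lt_trans with (K * Rabs (x' - x)).
  { apply Rmult_le_compat_r; auto. apply Rabs_pos. }
  apply Rlt_le_trans with (K * (eps / K)).
  { apply Rmult_lt_compat_l; auto. lra. }
  right. field. lra.
Qed.

Lemma cont_RC f d : 0 < d -> continue_in f (I0 d) 0 -> RC f.
Proof.
  intros Hd H eps Heps. destruct (H eps Heps) as [alp [Halp H']].
  exists (Rmin alp d). split. apply Rmin_pos; auto.
  intros t Ht. assert (Hb1 := Rmin_l alp d). assert (Hb2 := Rmin_r alp d).
  specialize (H' t). simpl in H'. unfold R_dist in H'. apply H'.
  split. split. unfold I0; lra. lra. rewrite Rminus_0_r, Rabs_pos_eq; lra.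
Qed.

Lemma deriv_cont f x l : derivable_pt_lim f x l -> continuity_pt f x.
Proof.
  intros H. apply continuity_pt_filterlim.
  assert (HH : continuous f x).
  { apply (ex_derive_continuous (K := R_AbsRing) (V := R_NormedModule)). exists l. apply is_derive_Reals; auto. }
  exact HH.
Qed.

Lemma cont_continue_in f D x : continuity_pt f x -> continue_in f D x.
Proof.
  intros H eps Heps. destruct (H eps Heps) as [alp [Halp H']].
  exists alp. split; auto. intros x' [[Dx Hne] Hd]. apply H'. split; auto. split; auto.
  unfold D_x, no_cond. split; auto.
Qed.

Lemma deriv_RC f l : derivable_pt_lim f 0 l -> RC f.
Proof.
  intros H. apply (cont_RC f 1). lra. apply cont_continue_in. eapply deriv_cont; eauto.
Qed.

Lemma continue_in_interior f d x : 0 < x < d -> continue_in f (I0 d) x -> continuity_pt f x.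
Proof.
  intros Hx H eps Heps. destruct (H eps Heps) as [alp [Halp H']].
  exists (Rmin alp (Rmin x (d - x))). split.
  { apply Rmin_pos; auto. apply Rmin_pos; lra. }
  intros x' [[_ Hne] Hd]. simpl in *. unfold R_dist in *.
  assert (Hb1 := Rmin_l alp (Rmin x (d - x))).
  assert (Hb2 := Rmin_r alp (Rmin x (d - x))).
  assert (Hb3 := Rmin_l x (d - x)). assert (Hb4 := Rmin_r x (d - x)).
  destruct (Req_dec x' x) as [E|E].
  { subst. rewrite Rminus_diag, Rabs_R0. auto. }
  apply H'. split. split. unfold I0. apply Rabs_def2 in Hd. lra. auto. lra.
Qed.

Lemma mvt_bound f f' y B : 0 < y ->
  (forall t, 0 < t <= y -> derivable_pt_lim f t (f' t)) ->
  (forall t, 0 < t <= y -> Rabs (f' t) <= B) -> RC f ->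
  Rabs (f y - f 0) <= B * y.
Proof.
  intros Hy Hd HB Hc. apply le_epsilon. intros eps Heps.
  destruct (Hc eps Heps) as [eta [Heta Hc']].
  set (t := Rmin eta y / 2).
  assert (Ht1 := Rmin_l eta y). assert (Ht2 := Rmin_r eta y).
  assert (Ht3 : 0 < Rmin eta y) by (apply Rmin_pos; auto).
  assert (HBp : 0 <= B) by (eapply Rle_trans; [apply Rabs_pos | apply (HB y); lra]).
  destruct (MVT_gen f t y f') as [c [Hc1 Hc2]].
  - intros x Hx. rewrite Rmin_left in Hx by (unfold t; lra). rewrite Rmax_right in Hx by (unfold t; lra).
    apply is_derive_Reals. apply Hd. unfold t in *; lra.
  - intros x Hx. rewrite Rmin_left in Hx by (unfold t; lra). rewrite Rmax_right in Hx by (unfold t; lra).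
    eapply deriv_cont. apply Hd. unfold t in *; lra.
  - rewrite Rmin_left in Hc1 by (unfold t; lra). rewrite Rmax_right in Hc1 by (unfold t; lra).
    replace (f y - f 0) with ((f y - f t) + (f t - f 0)) by ring.
    eapply Rle_trans. apply Rabs_triang.
    assert (H1 : Rabs (f t - f 0) < eps) by (apply Hc'; unfold t; lra).
    rewrite Hc2, Rabs_mult, (Rabs_pos_eq (y - t)) by (unfold t; lra).
    assert (H2 : Rabs (f' c) <= B) by (apply HB; unfold t in *; lra).
    assert (H3 : Rabs (f' c) * (y - t) <= B * (y - t)) by (apply Rmult_le_compat_r; unfold t in *; lra).
    assert (H4 : B * (y - t) <= B * y) by (apply Rmult_le_compat_l; unfold t in *; lra).
    lra.
Qed.

Lemma two_level f0 f1 f2 a c eps y : 0 < y -> f0 0 = 0 -> f1 0 = a ->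
  (forall t, 0 < t <= y -> derivable_pt_lim f0 t (f1 t)) ->
  (forall t, 0 < t <= y -> derivable_pt_lim f1 t (f2 t)) ->
  RC f0 -> RC f1 -> (forall t, 0 < t <= y -> Rabs (f2 t - c) <= eps) ->
  Rabs (f1 y - a - c * y) <= eps * y /\ Rabs (f0 y - a * y - c * y ^ 2 / 2) <= eps * y ^ 2.
Proof.
  intros Hy H0 H1 D0 D1 R0 R1 B.
  assert (L1 : forall s, 0 < s <= y -> Rabs (f1 s - a - c * s) <= eps * s).
  { intros s Hs.
    assert (M := mvt_bound (fun t => f1 t - a - c * t) (fun t => f2 t - c) s eps).
    simpl in M. rewrite H1 in M. replace (a - a - c * 0) with 0 in M by ring.
    rewrite Rminus_0_r in M. apply M; clear M.
    - lra.
    - intros t Ht. eapply dpl_eql.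
      apply dpl_minus. apply dpl_minus. apply D1; lra. apply dpl_const.
      apply (dpl_mult (fun _ => c) (fun t => t)). apply dpl_const. apply dpl_id. ring.
    - intros t Ht. apply B. lra.
    - intros e He. destruct (R1 (e/2)) as [eta [Heta Hr]]. lra.
      exists (Rmin eta (e / (2 * (Rabs c + 1)))). split.
      { apply Rmin_pos; auto. apply Rdiv_lt_0_compat. lra. generalize (Rabs_pos c); lra. }
      intros t Ht. assert (Hm1 := Rmin_l eta (e / (2 * (Rabs c + 1)))).
      assert (Hm2 := Rmin_r eta (e / (2 * (Rabs c + 1)))).
      rewrite H1. replace (f1 t - a - c * t - (a - a - c * 0)) with ((f1 t - f1 0) - c * t) by (rewrite H1; ring).
      eapply Rle_lt_trans. apply Rabs_triang. rewrite Rabs_Ropp, Rabs_mult, (Rabs_pos_eq t) by lra.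
      assert (Hr' : Rabs (f1 t - f1 0) < e / 2) by (apply Hr; lra).
      assert (Hct : Rabs c * t <= (Rabs c + 1) * (e / (2 * (Rabs c + 1)))).
      { apply Rmult_le_compat. apply Rabs_pos. lra. lra. lra. }
      replace ((Rabs c + 1) * (e / (2 * (Rabs c + 1)))) with (e / 2) in Hct by (field; generalize (Rabs_pos c); lra).
      lra. }
  split. apply L1; lra.
  assert (M := mvt_bound (fun t => f0 t - a * t - c * t ^ 2 / 2) (fun t => f1 t - a - c * t) y (eps * y)).
  cbv beta in M. rewrite H0 in M. replace (0 - a * 0 - c * 0 ^ 2 / 2) with 0 in M by field.
  rewrite Rminus_0_r in M. replace (eps * y ^ 2) with (eps * y * y) by ring.
  apply M; clear M.
  - lra.
  - intros t Ht. apply (dpl_ext (fun t => f0 t - a * t - c * (t * t) * / 2)). intros; field.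
    eapply dpl_eql.
    apply dpl_minus. apply dpl_minus. apply D0; lra.
    apply (dpl_mult (fun _ => a) (fun t => t)). apply dpl_const. apply dpl_id.
    apply (dpl_mult (fun t => c * (t * t)) (fun _ => / 2)).
    apply (dpl_mult (fun _ => c) (fun t => t * t)). apply dpl_const.
    apply (dpl_mult (fun t => t) (fun t => t)). apply dpl_id. apply dpl_id. apply dpl_const. field.
  - intros t Ht. eapply Rle_trans. apply L1; auto.
    assert (0 <= eps) by (eapply Rle_trans; [apply Rabs_pos| apply (B y); lra]).
    apply Rmult_le_compat_l; lra.
  - intros e He. destruct (R0 (e/2)) as [eta [Heta Hr]]. lra.
    set (K := Rabs a + Rabs c + 1).
    assert (HK : 0 < K) by (unfold K; generalize (Rabs_pos a) (Rabs_pos c); lra).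
    exists (Rmin (Rmin eta 1) (e / (2 * K))). split.
    { apply Rmin_pos. apply Rmin_pos; lra. apply Rdiv_lt_0_compat; lra. }
    intros t Ht. assert (Hm1 := Rmin_l (Rmin eta 1) (e / (2 * K))).
    assert (Hm2 := Rmin_r (Rmin eta 1) (e / (2 * K))).
    assert (Hm3 := Rmin_l eta 1). assert (Hm4 := Rmin_r eta 1).
    replace (f0 t - a * t - c * t ^ 2 / 2 - (f0 0 - a * 0 - c * 0 ^ 2 / 2))
      with ((f0 t - f0 0) - (a + c * t / 2) * t) by field.
    eapply Rle_lt_trans. apply Rabs_triang. rewrite Rabs_Ropp, Rabs_mult, (Rabs_pos_eq t) by lra.
    assert (Hr' : Rabs (f0 t - f0 0) < e / 2) by (apply Hr; lra).
    assert (Hat : Rabs (a + c * t / 2) <= K).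
    { eapply Rle_trans. apply Rabs_triang. unfold K.
      unfold Rdiv. rewrite !Rabs_mult, (Rabs_pos_eq t) by lra.
      rewrite (Rabs_pos_eq (/ 2)) by lra.
      assert (Rabs c * t * / 2 <= Rabs c) .
      { assert (0 <= Rabs c) by apply Rabs_pos. nra. }
      lra. }
    assert (Hct : Rabs (a + c * t / 2) * t <= K * (e / (2 * K))).
    { apply Rmult_le_compat. apply Rabs_pos. lra. auto. lra. }
    replace (K * (e / (2 * K))) with (e / 2) in Hct by (field; lra).
    lra.
Qed.

Lemma RC_minus f g : RC f -> RC g -> RC (fun t => f t - g t).
Proof.
  intros Hf Hg eps Heps. destruct (Hf (eps/2)) as [e1 [He1 H1]]. lra.
  destruct (Hg (eps/2)) as [e2 [He2 H2]]. lra.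
  exists (Rmin e1 e2). split. apply Rmin_pos; auto. intros t Ht.
  assert (Hm1 := Rmin_l e1 e2). assert (Hm2 := Rmin_r e1 e2).
  replace (f t - g t - (f 0 - g 0)) with ((f t - f 0) - (g t - g 0)) by ring.
  eapply Rle_lt_trans. apply Rabs_triang. rewrite Rabs_Ropp.
  assert (Rabs (f t - f 0) < eps / 2) by (apply H1; lra).
  assert (Rabs (g t - g 0) < eps / 2) by (apply H2; lra). lra.
Qed.

Lemma RC_scal f c : RC f -> RC (fun t => c * f t).
Proof.
  intros Hf eps Heps. destruct (Hf (eps / (Rabs c + 1))) as [e1 [He1 H1]].
  { apply Rdiv_lt_0_compat; auto. generalize (Rabs_pos c); lra. }
  exists e1. split; auto. intros t Ht.
  replace (c * f t - c * f 0) with (c * (f t - f 0)) by ring. rewrite Rabs_mult.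
  assert (Hb := H1 t Ht).
  apply Rle_lt_trans with (Rabs c * (eps / (Rabs c + 1))).
  apply Rmult_le_compat_l. apply Rabs_pos. lra.
  apply Rlt_le_trans with ((Rabs c + 1) * (eps / (Rabs c + 1))).
  apply Rmult_lt_compat_r. apply Rdiv_lt_0_compat; auto; generalize (Rabs_pos c); lra. lra.
  right. field. generalize (Rabs_pos c); lra.
Qed.

Lemma two_level0 f0 f1 f2 eps y : 0 < y -> f0 0 = 0 -> f1 0 = 0 ->
  (forall t, 0 < t <= y -> derivable_pt_lim f0 t (f1 t)) ->
  (forall t, 0 < t <= y -> derivable_pt_lim f1 t (f2 t)) ->
  RC f0 -> RC f1 -> (forall t, 0 < t <= y -> Rabs (f2 t) <= eps) ->
  Rabs (f1 y) <= eps * y /\ Rabs (f0 y) <= eps * y ^ 2.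
Proof.
  intros Hy H0 H1 D0 D1 R0 R1 B.
  destruct (two_level f0 f1 f2 0 0 eps y Hy H0 H1 D0 D1 R0 R1) as [T1 T2].
  { intros t Ht. rewrite Rminus_0_r. auto. }
  replace (f1 y - 0 - 0 * y) with (f1 y) in T1 by ring.
  replace (f0 y - 0 * y - 0 * y ^ 2 / 2) with (f0 y) in T2 by field. auto.
Qed.


Lemma clamp_cont (f : R -> R) D : 0 < D -> (forall t, I0 D t -> continue_in f (I0 D) t) ->
  forall z, z < D -> continuity_pt (fun s => f (Rmax 0 s)) z.
Proof.
  intros HD Hc z Hz eps Heps.
  destruct (Rlt_or_le z 0) as [Hn|Hp].
  - exists (- z). split. lra. intros s [_ Hs]. simpl in Hs. unfold R_dist in Hs. simpl. unfold R_dist.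
    apply Rabs_def2 in Hs. rewrite !Rmax_left by lra. rewrite Rminus_diag, Rabs_R0; auto.
  - assert (Hz0 : I0 D z) by (unfold I0; lra).
    destruct (Hc z Hz0 eps Heps) as [alp [Halp H']].
    exists (Rmin alp (D - z)). split. apply Rmin_pos; lra.
    intros s [_ Hs]. simpl in Hs. unfold R_dist in Hs. simpl. unfold R_dist.
    assert (Hm1 := Rmin_l alp (D - z)). assert (Hm2 := Rmin_r alp (D - z)).
    apply Rabs_def2 in Hs as Hs'.
    rewrite (Rmax_right 0 z) by lra.
    destruct (Rle_or_lt s 0) as [Hs0|Hs0].
    + rewrite (Rmax_left 0 s) by lra.
      destruct (Req_dec z 0) as [E|E].
      * subst. rewrite Rminus_diag, Rabs_R0; auto.
      * specialize (H' 0). simpl in H'. unfold R_dist in H'.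
        apply H'. split. split. unfold I0; lra. auto.
        rewrite Rabs_minus_sym, Rminus_0_r, Rabs_pos_eq by lra. lra.
    + rewrite (Rmax_right 0 s) by lra.
      destruct (Req_dec z s) as [E|E].
      * subst. rewrite Rminus_diag, Rabs_R0; auto.
      * specialize (H' s). simpl in H'. unfold R_dist in H'.
        apply H'. split. split. unfold I0; lra. auto. lra.
Qed.

Lemma antider (f : R -> R) D : 0 < D -> (forall t, I0 D t -> continue_in f (I0 D) t) ->
  forall t, t < D -> derivable_pt_lim (fun y => RInt (fun s => f (Rmax 0 s)) 0 y) t (f (Rmax 0 t)).
Proof.
  intros HD Hc t Ht. apply is_derive_Reals.
  assert (Hcc := clamp_cont f D HD Hc).
  apply (is_derive_RInt (fun s => f (Rmax 0 s)) (fun y => RInt (fun s => f (Rmax 0 s)) 0 y) 0 t).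
  - assert (Hp : 0 < (D - t) / 2) by lra.
    exists (mkposreal _ Hp). intros b Hb. change (Rabs (b - t) < (D - t) / 2) in Hb.
    apply (RInt_correct (V := R_CompleteNormedModule)). apply (ex_RInt_continuous (V := R_CompleteNormedModule)). intros z Hz.
    apply continuity_pt_filterlim. apply Hcc.
    apply Rabs_def2 in Hb. assert (Hmx : Rmax 0 b < D).
    { apply Rmax_lub_lt; lra. }
    lra.
  - apply continuity_pt_filterlim. apply Hcc. auto.
Qed.

Lemma unif (F : R -> R -> R) (P : R -> Prop) e Y :
  (forall t, 0 <= t <= Y -> forall eps, 0 < eps -> exists eta, 0 < eta /\
     forall e' t', P e' -> 0 <= t' <= Y -> Rabs (e' - e) < eta -> Rabs (t' - t) < eta ->
       Rabs (F e' t' - F e t) < eps) ->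
  P e -> forall eps, 0 < eps -> exists eta, 0 < eta /\
     forall e' t', P e' -> Rabs (e' - e) < eta -> 0 <= t' <= Y -> Rabs (F e' t' - F e t') < eps.
Proof.
  intros H Pe eps Heps.
  assert (Ex : forall t, exists eta, 0 < eta /\ (0 <= t <= Y ->
     forall e' t', P e' -> 0 <= t' <= Y -> Rabs (e' - e) < eta -> Rabs (t' - t) < eta ->
       Rabs (F e' t' - F e t) < eps / 2)).
  { intros t. destruct (classic (0 <= t <= Y)) as [Ht|Ht].
    - destruct (H t Ht (eps / 2)) as [eta [Heta H']]. lra. exists eta; split; auto.
    - exists 1. split. lra. intros; contradiction. }
  set (dl := fun t => proj1_sig (constructive_indefinite_description _ (Ex t))).
  assert (Hdl : forall t, 0 < dl t /\ (0 <= t <= Y ->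
     forall e' t', P e' -> 0 <= t' <= Y -> Rabs (e' - e) < dl t -> Rabs (t' - t) < dl t ->
       Rabs (F e' t' - F e t) < eps / 2)).
  { intros t. unfold dl. destruct (constructive_indefinite_description _ (Ex t)) as [x Hx]. simpl. auto. }
  set (delta := fun t => mkposreal (dl t) (proj1 (Hdl t))).
  destruct (compactness_value_1d 0 Y delta) as [d Hd].
  exists d. split. apply cond_pos.
  intros e' t' Pe' He' Ht'.
  assert (Hx := Hd t' Ht').
  apply NNPP. intro Hneg. apply Hx. intros [t [Ht [Ht1 Ht2]]]. apply Hneg.
  simpl in Ht1, Ht2.
  destruct (Hdl t) as [_ Hdt].
  assert (A1 : Rabs (F e' t' - F e t) < eps / 2) by (apply Hdt; auto; lra).
  assert (A2 : Rabs (F e t' - F e t) < eps / 2).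
  { assert (Hdp : 0 < dl t) by (apply Hdl).
    apply Hdt; auto. rewrite Rminus_diag, Rabs_R0. lra. }
  replace (F e' t' - F e t') with ((F e' t' - F e t) - (F e t' - F e t)) by ring.
  eapply Rle_lt_trans. apply Rabs_triang. rewrite Rabs_Ropp. lra.
Qed.


Lemma h0 : h 0 = 0.
Proof.
  unfold h. replace (ln 0) with 0. rewrite Rinv_0; ring.
  unfold ln. destruct (Rlt_dec 0 0) as [r|r]; [exfalso; apply (Rlt_irrefl 0); exact r|reflexivity].
Qed.

Lemma inv_neg_bound L del : 0 < del -> L < - / del -> 0 < - / L < del.
Proof.
  intros Hd HL. assert (Hi : 0 < / del) by (apply Rinv_0_lt_compat; auto).
  assert (Hm : 0 < - L) by lra.
  replace (- / L) with (/ (- L)) by (field; lra).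
  split. apply Rinv_0_lt_compat; auto.
  rewrite <- (Rinv_inv del). apply Rinv_lt_contravar. nra. lra.
Qed.

Lemma h_small del x : 0 < del -> 0 < x < exp (- / del) -> 0 < h x < del.
Proof.
  intros Hd Hx. unfold h. apply inv_neg_bound; auto.
  rewrite <- (ln_exp (- / del)). apply ln_increasing; lra.
Qed.

Lemma ln_neg x : 0 < x < 1 -> ln x < 0.
Proof. intros Hx. rewrite <- ln_1. apply ln_increasing; lra. Qed.

Lemma expneg_lt1 del : 0 < del -> exp (- / del) < 1.
Proof.
  intros Hd. rewrite <- exp_0. apply exp_increasing.
  assert (0 < / del) by (apply Rinv_0_lt_compat; auto). lra.
Qed.

Lemma h_deriv x : 0 < x < 1 -> derivable_pt_lim h x (/ x * / (ln x) ^ 2).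
Proof.
  intros Hx. assert (HL := ln_neg x Hx). apply is_derive_Reals. unfold h.
  auto_derive. split. lra. split. lra. auto. field. split; lra.
Qed.

Lemma hinv_deriv u : u <> 0 -> derivable_pt_lim hinv u (hinv u * / u ^ 2).
Proof.
  intros Hu. apply is_derive_Reals. unfold hinv.
  auto_derive. auto. field. auto.
Qed.

Lemma h_cont_within del x : 0 < del -> I0 (exp (- / del)) x ->
  filterlim h (within (I0 (exp (- / del))) (locally x)) (within (I0 del) (locally (h x))).
Proof.
  intros Hd Hx. assert (H1 := expneg_lt1 del Hd).
  assert (Hmap : forall x', I0 (exp (- / del)) x' -> I0 del (h x')).
  { intros x' [H2 H3]. destruct (Req_dec x' 0) as [E|E].
    - subst. rewrite h0. split; lra.
    - assert (HH : 0 < h x' < del) by (apply h_small; auto; split; lra). split; lra. }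
  intros P [eps HP].
  destruct Hx as [Hx1 Hx2].
  destruct (Req_dec x 0) as [E|E].
  - subst. rewrite h0 in HP.
    assert (Hp : 0 < Rmin (exp (- / eps)) (exp (- / del))) by (apply Rmin_pos; apply exp_pos).
    exists (mkposreal _ Hp). intros x' Hb Dx'. apply HP.
    + change (Rabs (h x' - 0) < eps).
      change (Rabs (x' - 0) < Rmin (exp (- / eps)) (exp (- / del))) in Hb.
      destruct Dx' as [D1 D2]. destruct (Req_dec x' 0) as [E'|E'].
      * subst. rewrite h0, Rminus_diag, Rabs_R0. apply cond_pos.
      * rewrite Rminus_0_r in *. rewrite Rabs_pos_eq in Hb by lra.
        assert (Hm := Rmin_l (exp (- / eps)) (exp (- / del))).
        assert (HH : 0 < h x' < eps) by (apply h_small; [apply cond_pos| split; lra]).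
        rewrite Rabs_pos_eq; lra.
    + apply Hmap; auto.
  - assert (Hxp : 0 < x) by lra.
    assert (Hc : continuity_pt h x).
    { eapply deriv_cont. apply h_deriv. lra. }
    apply continuity_pt_filterlim in Hc.
    assert (Hl : locally (h x) (fun y => I0 del y -> P y)).
    { exists eps. intros y Hy Hy2. apply HP; auto. }
    destruct (Hc _ Hl) as [eps2 H2]. exists eps2. intros x' Hb Dx'. apply H2; auto.
Qed.

Lemma h_maps del x : 0 < del -> I0 (exp (- / del)) x -> I0 del (h x).
Proof.
  intros Hd [H1 H2]. destruct (Req_dec x 0) as [E|E].
  - subst. rewrite h0. split; lra.
  - assert (0 < h x < del) by (apply h_small; auto; split; lra). split; lra.
Qed.


Definition A (y w : R) : R := / ((1 + y * w) * (1 + y * w)) * exp (w * / (1 + y * w)).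
Definition wf (g g2 : R -> R) (y : R) : R :=
  if Req_EM_T y 0 then g2 0 / 2 else (g y - y) * / (y * y).
Definition HdF (g g1 g2 : R -> R) (x : R) : R := g1 (h x) * A (h x) (wf g g2 (h x)).

Lemma GL_ne G L : G <> 0 -> L <> 0 -> 1 + -1 * (G * L - -1) <> 0.
Proof.
  intros. replace (1 + -1 * (G * L - -1)) with (- (G * L)) by ring.
  apply Ropp_neq_0_compat. apply Rmult_integral_contrapositive_currified; auto.
Qed.

Lemma key_exp x G : 0 < x < 1 -> G <> 0 ->
  let y := h x in let w := (G - y) * / (y * y) in
  hinv G * / x = exp (w * / (1 + y * w)).
Proof.
  intros Hx HG y w. assert (HL := ln_neg x Hx).
  assert (E : w * / (1 + y * w) = - / G + - ln x).
  { unfold w, y, h. field. split; auto. split. lra. apply GL_ne; auto; lra. }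
  rewrite E, exp_plus, (exp_Ropp (ln x)), exp_ln by lra. unfold hinv. reflexivity.
Qed.

Lemma key_der x G g1v : 0 < x < 1 -> G <> 0 ->
  let y := h x in let w := (G - y) * / (y * y) in
  hinv G * / G ^ 2 * (g1v * (/ x * / ln x ^ 2)) = g1v * A y w.
Proof.
  intros Hx HG y w. assert (HL := ln_neg x Hx).
  assert (E := key_exp x G Hx HG). simpl in E. fold y w in E.
  unfold A. rewrite <- E.
  assert (E2 : (1 + y * w) = - G * ln x).
  { unfold w, y, h. field. lra. }
  rewrite E2. field. repeat split; try lra; auto.
Qed.

Lemma filt_weaken {T : UniformSpace} (f : T -> R) (D : T -> Prop) x L :
  filterlim f (locally x) L -> filterlim f (within D (locally x)) L.
Proof.
  intros H P HP. apply H in HP. unfold within, filtermap in *.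
  destruct HP as [eps He]. exists eps. intros y Hy _. apply He; auto.
Qed.

Lemma within_mono {T : UniformSpace} {U} (f : T -> U) (D1 D2 : T -> Prop) x L :
  (forall z, D1 z -> D2 z) -> filterlim f (within D2 (locally x)) L -> filterlim f (within D1 (locally x)) L.
Proof.
  intros Hs H P HP. apply H in HP. unfold within, filtermap in *.
  destruct HP as [eps He]. exists eps. intros y Hy Dy. apply He; auto.
Qed.

Lemma within_to_loc {T} (F : (T -> Prop) -> Prop) (f : T -> R) D y :
  filterlim f F (within D (locally y)) -> filterlim f F (locally y).
Proof.
  intros H P HP. apply H. destruct HP as [eps He]. exists eps. intros z Hz _. auto.
Qed.

Lemma continue_in_filt (f : R -> R) (D : R -> Prop) (x : R) : continue_in f D x -> filterlim f (within D (locally x)) (locally (f x)).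
Proof.
  intros H. apply within_lim. intros eps Heps. destruct (H eps Heps) as [alp [Halp H']].
  exists alp. split; auto. intros x' Dx Hx. destruct (Req_dec x' x) as [E|E].
  - subst. rewrite Rminus_diag, Rabs_R0. auto.
  - apply (H' x'). split. split; auto. simpl. unfold R_dist. auto.
Qed.

Lemma filt_continue_in (f : R -> R) (D : R -> Prop) (x : R) : filterlim f (within D (locally x)) (locally (f x)) -> continue_in f D x.
Proof.
  intros H. rewrite <- within_lim in H. intros eps Heps. destruct (H eps Heps) as [alp [Halp H']].
  exists alp. split; auto. intros x' [[Dx _] Hx]. apply H'; auto.
Qed.

Lemma lim_minus {T} {F : (T -> Prop) -> Prop} {FF : Filter F} (f g : T -> R) a b :
  filterlim f F (locally a) -> filterlim g F (locally b) ->
  filterlim (fun z => f z - g z) F (locally (a - b)).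
Proof.
  intros Hf Hg. apply (lim_plus f (fun z => - g z)); auto.
  apply (lim_cont g (fun x => - x)); auto. apply (filterlim_opp b).
Qed.

Lemma lim_A {T} {F : (T -> Prop) -> Prop} {FF : Filter F} (u v : T -> R) a b :
  filterlim u F (locally a) -> filterlim v F (locally b) -> 1 + a * b <> 0 ->
  filterlim (fun z => A (u z) (v z)) F (locally (A a b)).
Proof.
  intros Hu Hv Hne. unfold A.
  assert (H1 : filterlim (fun z => 1 + u z * v z) F (locally (1 + a * b))).
  { apply lim_plus. apply lim_const. apply lim_mult; auto. }
  apply lim_mult.
  - apply lim_inv. apply lim_mult; auto. apply Rmult_integral_contrapositive_currified; auto.
  - apply lim_exp. apply lim_mult; auto. apply lim_inv; auto.
Qed.

Definition Ghyp (d : R) (g g1 g2 : R -> R) : Prop :=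
  0 < d /\ g 0 = 0 /\ C2_on_with (I0 d) g g1 g2 /\ bigO_sq (I0 d) g.

Lemma g1_0 d g g1 g2 : Ghyp d g g1 g2 -> g1 0 = 1.
Proof.
  intros [Hd [Hg0 [[D0 [D1 C2]] [C HC]]]].
  assert (HD := D0 0 ltac:(unfold I0; lra)).
  destruct (Req_dec (g1 0) 1) as [E|E]; auto. exfalso.
  set (eps := Rabs (g1 0 - 1) / 3).
  assert (Heps : 0 < eps) by (unfold eps; apply Rdiv_lt_0_compat; [apply Rabs_pos_lt; lra | lra]).
  destruct (HD eps Heps) as [alp [Halp H']].
  set (x := Rmin (Rmin alp d) (eps / (Rabs C + 1)) / 2).
  assert (Hp : 0 < eps / (Rabs C + 1)) by (apply Rdiv_lt_0_compat; auto; generalize (Rabs_pos C); lra).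
  assert (Hm1 := Rmin_l (Rmin alp d) (eps / (Rabs C + 1))).
  assert (Hm2 := Rmin_r (Rmin alp d) (eps / (Rabs C + 1))).
  assert (Hm3 := Rmin_l alp d). assert (Hm4 := Rmin_r alp d).
  assert (Hm0 : 0 < Rmin (Rmin alp d) (eps / (Rabs C + 1))) by (apply Rmin_pos; auto; apply Rmin_pos; auto).
  assert (Hx : 0 < x) by (unfold x; lra).
  assert (Q := H' x). simpl in Q. unfold R_dist in Q. rewrite !Rminus_0_r, Hg0, Rminus_0_r in Q.
  assert (Q' : Rabs (g x / x - g1 0) < eps).
  { apply Q. split. split. unfold I0, x; lra. lra. rewrite Rabs_pos_eq; unfold x; lra. }
  assert (B := HC x ltac:(unfold I0, x; lra)).
  assert (B2 : Rabs (g x / x - 1) <= Rabs C * x).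
  { replace (g x / x - 1) with ((g x - x) / x) by (field; lra).
    unfold Rdiv. rewrite Rabs_mult, (Rabs_pos_eq (/ x)) by (apply Rlt_le, Rinv_0_lt_compat; auto).
    apply (Rmult_le_reg_r x); auto. rewrite Rmult_assoc, Rinv_l, Rmult_1_r by lra.
    eapply Rle_trans. apply B. assert (C * x ^ 2 <= Rabs C * x ^ 2) by (apply Rmult_le_compat_r; [apply pow2_ge_0 | apply RRle_abs]).
    simpl in *. lra. }
  assert (B3 : Rabs C * x <= eps).
  { apply Rle_trans with ((Rabs C + 1) * (eps / (Rabs C + 1))).
    apply Rmult_le_compat. apply Rabs_pos. lra. lra. unfold x; lra.
    right. field. generalize (Rabs_pos C); lra. }
  assert (T : Rabs (g1 0 - 1) <= Rabs (g x / x - g1 0) + Rabs (g x / x - 1)).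
  { replace (g1 0 - 1) with (- (g x / x - g1 0) + (g x / x - 1)) by ring.
    eapply Rle_trans. apply Rabs_triang. rewrite Rabs_Ropp. lra. }
  unfold eps in *. lra.
Qed.


Lemma taylor_g d g g1 g2 c eps eta : Ghyp d g g1 g2 -> 0 < eta -> eta <= d ->
  (forall t, 0 < t < eta -> Rabs (g2 t - c) <= eps) ->
  forall y, 0 <= y < eta ->
  Rabs (g1 y - 1 - c * y) <= eps * y /\ Rabs (g y - 1 * y - c * y ^ 2 / 2) <= eps * y ^ 2.
Proof.
  intros HG Heta Hed Hb y Hy.
  assert (H10 := g1_0 d g g1 g2 HG).
  destruct HG as [Hd [Hg0 [[D0 [D1 C2]] _]]].
  destruct (Req_dec y 0) as [E|E].
  - subst. rewrite H10, Hg0. replace (1 - 1 - c * 0) with 0 by ring.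
    replace (0 - 1 * 0 - c * 0 ^ 2 / 2) with 0 by field. rewrite Rabs_R0.
    replace (eps * 0) with 0 by ring. replace (eps * 0 ^ 2) with 0 by ring. lra.
  - apply two_level with (f2 := g2); auto; try lra.
    + intros t Ht. apply (Din_interior g g1 d t). lra. apply D0. unfold I0; lra.
    + intros t Ht. apply (Din_interior g1 g2 d t). lra. apply D1. unfold I0; lra.
    + apply (cont_RC g d Hd). apply (Din_cont g g1). apply D0. unfold I0; lra.
    + apply (cont_RC g1 d Hd). apply (Din_cont g1 g2). apply D1. unfold I0; lra.
    + intros t Ht. apply Hb. lra.
Qed.

Lemma g2_near0 d g g1 g2 : Ghyp d g g1 g2 -> forall eps, 0 < eps ->
  exists eta, 0 < eta /\ eta <= d /\ forall t, 0 < t < eta -> Rabs (g2 t - g2 0) <= eps.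
Proof.
  intros HG eps Heps. destruct HG as [Hd [Hg0 [[D0 [D1 C2]] _]]].
  destruct (C2 0 ltac:(unfold I0; lra) eps Heps) as [alp [Halp H']].
  exists (Rmin alp d). split. apply Rmin_pos; auto. split. apply Rmin_r.
  intros t Ht. assert (Hm1 := Rmin_l alp d). assert (Hm2 := Rmin_r alp d).
  left. apply (H' t). split. split. unfold I0; lra. lra. simpl. unfold R_dist.
  rewrite Rminus_0_r, Rabs_pos_eq; lra.
Qed.

Lemma wf_pos_eq g g2 y : y <> 0 -> wf g g2 y = (g y - y) * / (y * y).
Proof. intros Hy. unfold wf. destruct (Req_EM_T y 0); [contradiction | auto]. Qed.

Lemma wf_zero g g2 : wf g g2 0 = g2 0 / 2.
Proof. unfold wf. destruct (Req_EM_T 0 0); [auto | contradiction]. Qed.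

Lemma wf_lim d g g1 g2 del y : Ghyp d g g1 g2 -> del <= d -> I0 del y ->
  filterlim (wf g g2) (within (I0 del) (locally y)) (locally (wf g g2 y)).
Proof.
  intros HG Hdel Hy.
  destruct (Req_dec y 0) as [E|E].
  - subst. apply within_lim. intros eps Heps.
    destruct (g2_near0 d g g1 g2 HG (eps / 2)) as [eta [Heta [Hed Hb]]]. lra.
    exists eta. split; auto. intros x' Dx Hx.
    destruct (Req_dec x' 0) as [E'|E'].
    + subst. rewrite Rminus_diag, Rabs_R0. auto.
    + destruct Dx as [Dx1 Dx2]. rewrite Rminus_0_r, Rabs_pos_eq in Hx by lra.
      destruct (taylor_g d g g1 g2 (g2 0) (eps / 2) eta HG Heta Hed Hb x') as [_ T]. lra.
      rewrite wf_pos_eq, wf_zero by auto.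
      replace ((g x' - x') * / (x' * x') - g2 0 / 2) with ((g x' - 1 * x' - g2 0 * x' ^ 2 / 2) * / (x' * x')) by (field; auto).
      rewrite Rabs_mult, (Rabs_pos_eq (/ (x' * x'))) by (apply Rlt_le, Rinv_0_lt_compat; nra).
      apply Rle_lt_trans with (eps / 2 * x' ^ 2 * / (x' * x')).
      apply Rmult_le_compat_r; auto. apply Rlt_le, Rinv_0_lt_compat; nra.
      replace (eps / 2 * x' ^ 2 * / (x' * x')) with (eps / 2) by (field; auto). lra.
  - destruct HG as [Hd [Hg0 [[D0 [D1 C2]] HO]]].
    destruct Hy as [Hy1 Hy2]. assert (Hyp : 0 < y) by lra.
    apply filt_weaken.
    apply (filterlim_ext_loc (fun t => (g t - t) * / (t * t))).
    { exists (mkposreal y Hyp). intros t Ht. change (Rabs (t - y) < y) in Ht.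
      apply Rabs_def2 in Ht. rewrite wf_pos_eq; auto. lra. }
    rewrite wf_pos_eq by auto.
    assert (Hgc : continuity_pt g y).
    { eapply deriv_cont. apply (Din_interior g g1 d y). lra. apply D0. unfold I0; lra. }
    apply continuity_pt_filterlim in Hgc.
    apply lim_mult. apply lim_minus; auto. apply filterlim_id.
    apply lim_inv. apply lim_mult; apply filterlim_id. nra.
Qed.

Lemma g1_lim d g g1 g2 del y : Ghyp d g g1 g2 -> del <= d -> I0 del y ->
  filterlim g1 (within (I0 del) (locally y)) (locally (g1 y)).
Proof.
  intros HG Hdel Hy. destruct HG as [Hd [Hg0 [[D0 [D1 C2]] HO]]].
  apply (within_mono g1 (I0 del) (I0 d)). { intros z [H1 H2]; split; lra. }
  apply continue_in_filt. apply (Din_cont g1 g2). apply D1. destruct Hy; split; lra.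
Qed.

Lemma onep_pos g g2 del y : (forall y, 0 < y < del -> 0 < g y) -> I0 del y -> 0 < 1 + y * wf g g2 y.
Proof.
  intros Hp Hy. destruct (Req_dec y 0) as [E|E].
  - subst. lra.
  - rewrite wf_pos_eq by auto. destruct Hy as [Hy1 Hy2].
    replace (1 + y * ((g y - y) * / (y * y))) with (g y / y) by (field; auto).
    apply Rdiv_lt_0_compat. apply Hp; lra. lra.
Qed.

Lemma lim_to_limit1_in (f : R -> R) (D : R -> Prop) (l x0 : R) : filterlim f (within D (locally x0)) (locally l) -> limit1_in f D l x0.
Proof.
  intros H. rewrite <- within_lim in H. intros eps Heps. destruct (H eps Heps) as [eta [Heta H']].
  exists eta. split; auto. intros x [Dx Hx]. simpl in *. unfold R_dist in *. apply H'; auto.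
Qed.

Lemma L1 d g g1 g2 del : Ghyp d g g1 g2 -> 0 < del -> del <= d ->
  (forall y, 0 < y < del -> 0 < g y) ->
  C1_on (I0 (exp (- / del))) (conjH g) (HdF g g1 g2).
Proof.
  intros HG Hdel Hdd Hpos.
  assert (H10 := g1_0 d g g1 g2 HG).
  assert (Hd1 := expneg_lt1 del Hdel).
  assert (Hd0 := exp_pos (- / del)).
  assert (Hh : forall x, I0 (exp (- / del)) x -> filterlim h (within (I0 (exp (- / del))) (locally x)) (within (I0 del) (locally (h x)))).
  { intros x Hx. apply h_cont_within; auto. }
  assert (Hhy : forall x, I0 (exp (- / del)) x -> I0 del (h x)).
  { intros x [Hx1 Hx2]. destruct (Req_dec x 0) as [E|E].
    - subst. rewrite h0. split; lra.
    - assert (0 < h x < del) by (apply h_small; auto; split; lra). split; lra. }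
  assert (Hcomp : forall x, I0 (exp (- / del)) x ->
     filterlim (fun x => g1 (h x)) (within (I0 (exp (- / del))) (locally x)) (locally (g1 (h x))) /\
     filterlim (fun x => wf g g2 (h x)) (within (I0 (exp (- / del))) (locally x)) (locally (wf g g2 (h x))) /\
     filterlim h (within (I0 (exp (- / del))) (locally x)) (locally (h x))).
  { intros x Hx. split; [|split].
    - eapply filterlim_comp. apply Hh; auto. eapply g1_lim; eauto.
    - eapply filterlim_comp. apply Hh; auto. eapply wf_lim; eauto.
    - eapply within_to_loc. apply Hh; auto. }
  split.
  - intros x Hx. destruct (Req_dec x 0) as [E|E].
    + subst. unfold D_in. apply lim_to_limit1_in.
      destruct (Hcomp 0 Hx) as [_ [Hw Hhh]].
      assert (LQ : filterlim (fun x => exp (wf g g2 (h x) * / (1 + h x * wf g g2 (h x))))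
                     (within (I0 (exp (- / del))) (locally 0)) (locally (exp (wf g g2 (h 0) * / (1 + h 0 * wf g g2 (h 0)))))).
      { apply lim_exp. apply lim_mult; auto. apply lim_inv. apply lim_plus. apply lim_const.
        apply lim_mult; auto. rewrite h0. lra. }
      assert (EV : exp (wf g g2 (h 0) * / (1 + h 0 * wf g g2 (h 0))) = HdF g g1 g2 0).
      { unfold HdF, A. rewrite h0, H10. replace (1 + 0 * wf g g2 0) with 1 by ring.
        rewrite !Rmult_1_r, !Rinv_1. ring. }
      rewrite EV in LQ.
      apply (within_mono _ (D_x (I0 (exp (- / del))) 0) (I0 (exp (- / del)))) in LQ. 2: { intros z [Dz _]; auto. }
      eapply filterlim_ext_loc. 2: exact LQ.
      exists (mkposreal 1 Rlt_0_1). intros x' _ [[Dx1 Dx2] Hne].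
      assert (Hx' : 0 < x' < 1) by lra.
      assert (Hy := h_small del x' Hdel ltac:(split; lra)).
      assert (HG' : g (h x') <> 0) by (apply Rgt_not_eq, Hpos; lra).
      rewrite wf_pos_eq by lra.
      rewrite <- (key_exp x' (g (h x')) Hx' HG').
      unfold conjH. destruct (Req_EM_T x' 0) as [E1|E1]; [lra|].
      destruct (Req_EM_T 0 0) as [_|E2]; [|lra]. field. lra.
    + destruct Hx as [Hx1 Hx2]. assert (Hxp : 0 < x) by lra.
      apply deriv_Din.
      assert (Hy := h_small del x Hdel ltac:(split; lra)).
      assert (HGp : 0 < g (h x)) by (apply Hpos; lra).
      destruct HG as [Hd [Hg0 [[D0 [D1 C2]] HO]]].
      assert (Dg : derivable_pt_lim g (h x) (g1 (h x))).
      { apply (Din_interior g g1 d). lra. apply D0. unfold I0; lra. }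
      assert (Dc := dpl_comp h (fun u => hinv (g u)) x _ _ (h_deriv x ltac:(lra))
                      (dpl_comp g hinv (h x) _ _ Dg (hinv_deriv (g (h x)) ltac:(lra)))).
      apply is_derive_Reals. apply (is_derive_ext_loc (fun t => hinv (g (h t)))).
      { exists (mkposreal x Hxp). intros t Ht. change (Rabs (t - x) < x) in Ht. apply Rabs_def2 in Ht.
        unfold conjH. destruct (Req_EM_T t 0); [lra | auto]. }
      apply is_derive_Reals. eapply dpl_eql. exact Dc.
      unfold HdF. rewrite wf_pos_eq by lra.
      rewrite <- (key_der x (g (h x)) (g1 (h x)) ltac:(lra) ltac:(lra)). ring.
  - intros x Hx. apply filt_continue_in. unfold HdF.
    destruct (Hcomp x Hx) as [Hg1 [Hw Hhh]].
    apply lim_mult; auto. apply lim_A; auto.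
    apply Rgt_not_eq. apply (onep_pos g g2 del); auto.
Qed.

Lemma loc_ed (f : R -> R) x l : filterlim f (locally x) (locally l) ->
  forall eps, 0 < eps -> exists eta, 0 < eta /\ forall x', Rabs (x' - x) < eta -> Rabs (f x' - l) < eps.
Proof.
  intros H eps Heps. rewrite filterlim_locally in H.
  destruct (H (mkposreal eps Heps)) as [[eta Heta] H']. exists eta. split. auto.
  intros x' Hx. apply (H' x' Hx).
Qed.

Lemma cpt_ed f x : continuity_pt f x ->
  forall eps, 0 < eps -> exists eta, 0 < eta /\ forall x', Rabs (x' - x) < eta -> Rabs (f x' - f x) < eps.
Proof. intros H. apply loc_ed. apply continuity_pt_filterlim. auto. Qed.

Lemma quot_cont (F : R -> R) y : 0 < y -> continuity_pt F y ->
  forall eps, 0 < eps -> exists eta, 0 < eta /\ forall y', Rabs (y' - y) < eta ->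
    Rabs (F y' * / (y' * y') - F y * / (y * y)) < eps.
Proof.
  intros Hy Hc. apply loc_ed. apply continuity_pt_filterlim in Hc.
  apply lim_mult; auto. apply lim_inv. apply lim_mult; apply filterlim_id. nra.
Qed.

Lemma quot_bound X p hh B eps : hh <> 0 -> Rabs (X - hh * p) <= Rabs hh * B -> B < eps ->
  Rabs (X / hh - p) < eps.
Proof.
  intros Hh HB Heps. replace (X / hh - p) with ((X - hh * p) * / hh) by (field; auto).
  rewrite Rabs_mult, Rabs_inv. apply Rle_lt_trans with B; auto.
  apply (Rmult_le_reg_r (Rabs hh)). apply Rabs_pos_lt; auto.
  rewrite Rmult_assoc, Rinv_l, Rmult_1_r. lra. apply Rabs_no_R0; auto.
Qed.

Lemma abs_le_inv x a : Rabs x <= a -> - a <= x <= a.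
Proof. intros H. destruct (Rcase_abs x) as [Hx|Hx]; [rewrite Rabs_left in H | rewrite Rabs_right in H]; lra. Qed.

Lemma neg_abs_le x : - Rabs x <= x.
Proof. destruct (Rcase_abs x) as [Hx|Hx]; [rewrite Rabs_left | rewrite Rabs_right]; lra. Qed.

Lemma pos_from_taylor (gy y c K : R) : 0 < y -> Rabs (gy - 1 * y - c * y ^ 2 / 2) <= K * y ^ 2 ->
  y * (Rabs c / 2 + K) < 1 -> 0 < gy.
Proof.
  intros Hy HT Hs. apply abs_le_inv in HT.
  assert (Hc := neg_abs_le c).
  assert (Hy2 : 0 < y ^ 2) by (apply pow_lt; auto).
  assert (H1 : - Rabs c * y ^ 2 <= c * y ^ 2) by (apply Rmult_le_compat_r; lra).
  assert (H2 : y * (y * (Rabs c / 2 + K)) < y * 1) by (apply Rmult_lt_compat_l; auto).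
  simpl in *. nra.
Qed.

Lemma div_sq_bound X y B : 0 < y -> Rabs X <= B * y ^ 2 -> Rabs (X * / (y * y)) <= B.
Proof.
  intros Hy HX. rewrite Rabs_mult, (Rabs_pos_eq (/ (y * y))) by (apply Rlt_le, Rinv_0_lt_compat; nra).
  apply Rle_trans with (B * y ^ 2 * / (y * y)).
  apply Rmult_le_compat_r; auto. apply Rlt_le, Rinv_0_lt_compat; nra.
  right. field. lra.
Qed.

Lemma small_prod K u eps : 0 <= K -> 0 <= u -> u < eps / (K + 1) -> 0 < eps -> K * u < eps.
Proof.
  intros HK Hu Hue Heps.
  apply Rle_lt_trans with ((K + 1) * u). nra.
  apply Rlt_le_trans with ((K + 1) * (eps / (K + 1))).
  apply Rmult_lt_compat_l; lra. right. field. lra.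
Qed.


Definition pe (g2e : R -> R -> R) e y := RInt (fun s => g2e e (Rmax 0 s)) 0 y.
Definition Ge (g2e : R -> R -> R) e y := RInt (fun s => pe g2e e (Rmax 0 s)) 0 y.
Definition we (g2e : R -> R -> R) e y :=
  if Req_EM_T y 0 then g2e e 0 / 2 else Ge g2e e y * / (y * y).
Definition A' (y w : R) : R := exp (w * / (1 + y * w)) *
   (/ ((1 + y * w) * (1 + y * w) * (1 + y * w) * (1 + y * w)) - 2 * y * / ((1 + y * w) * (1 + y * w) * (1 + y * w))).
Definition inE (e0 r e : R) := e0 - r < e < e0 + r.
Definition cont2 (P D : R -> Prop) (phi : R -> R -> R) e y :=
  forall eps, 0 < eps -> exists eta, 0 < eta /\ forall e' y', P e' -> D y' ->
    Rabs (e' - e) < eta -> Rabs (y' - y) < eta -> Rabs (phi e' y' - phi e y) < eps.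

Lemma A_deriv y w : 1 + y * w <> 0 -> derivable_pt_lim (A y) w (A' y w).
Proof. intros H. apply is_derive_Reals. unfold A, A'. auto_derive. repeat split; auto. field. auto. Qed.

Lemma lim_A' {T} {F : (T -> Prop) -> Prop} {FF : Filter F} (u v : T -> R) a b :
  filterlim u F (locally a) -> filterlim v F (locally b) -> 1 + a * b <> 0 ->
  filterlim (fun z => A' (u z) (v z)) F (locally (A' a b)).
Proof.
  intros Hu Hv Hne. unfold A'.
  assert (H1 : filterlim (fun z => 1 + u z * v z) F (locally (1 + a * b))).
  { apply lim_plus. apply lim_const. apply lim_mult; auto. }
  apply lim_mult.
  - apply lim_exp. apply lim_mult; auto. apply lim_inv; auto.
  - apply lim_minus.
    + apply lim_inv. repeat apply lim_mult; auto.
      repeat apply Rmult_integral_contrapositive_currified; auto.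
    + apply lim_mult. apply lim_mult; auto. apply lim_const.
      apply lim_inv. repeat apply lim_mult; auto.
      repeat apply Rmult_integral_contrapositive_currified; auto.
Qed.

Lemma cont2_filt (P D : R -> Prop) phi e y : cont2 P D phi e y ->
  filterlim (fun z => phi (fst z) (snd z)) (within (fun z => P (fst z) /\ D (snd z)) (locally (e, y))) (locally (phi e y)).
Proof. intros H. apply within2_lim. simpl. exact H. Qed.

Section P2.
Variables (a b d : R) (g g1 g2 g2e : R -> R -> R).
Hypothesis Hab : a < b.
Hypothesis Hd : 0 < d.
Hypothesis Hg : forall e, a < e < b ->
        (forall y, I0 d y -> 0 <= g e y) /\ g e 0 = 0 /\
        C2_on_with (I0 d) (g e) (g1 e) (g2 e) /\ bigO_sq (I0 d) (g e).
Hypothesis Hder : forall e y, a < e < b -> I0 d y ->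
        derivable_pt_lim (fun e' => g2 e' y) e (g2e e y).
Hypothesis Hjc : joint_cont_on (fun e => a < e < b) (I0 d) g2e.

Lemma GH e : a < e < b -> Ghyp d (g e) (g1 e) (g2 e).
Proof. intros He. destruct (Hg e He) as [_ [H1 [H2 H3]]]. unfold Ghyp. auto. Qed.

Lemma g2e_cont e t : a < e < b -> I0 d t -> continue_in (g2e e) (I0 d) t.
Proof.
  intros He Ht eps Heps. destruct (Hjc e t He Ht eps Heps) as [eta [Heta H']].
  exists eta. split; auto. intros x [[Dx _] Hx]. simpl in *. unfold R_dist in *.
  apply H'; auto. rewrite Rminus_diag, Rabs_R0; auto.
Qed.

Lemma pe_der e t : a < e < b -> t < d -> derivable_pt_lim (pe g2e e) t (g2e e (Rmax 0 t)).
Proof. intros He Ht. apply (antider (g2e e) d Hd); auto. intros s Hs. apply g2e_cont; auto. Qed.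

Lemma pe0 e : pe g2e e 0 = 0.
Proof. unfold pe. rewrite RInt_point. reflexivity. Qed.

Lemma Ge_der e t : a < e < b -> t < d -> derivable_pt_lim (Ge g2e e) t (pe g2e e (Rmax 0 t)).
Proof.
  intros He Ht. apply (antider (pe g2e e) d Hd); auto. intros s Hs.
  apply cont_continue_in. eapply deriv_cont. apply pe_der; auto. destruct Hs; lra.
Qed.

Lemma Ge0 e : Ge g2e e 0 = 0.
Proof. unfold Ge. rewrite RInt_point. reflexivity. Qed.

Lemma g1_der e t : a < e < b -> 0 < t < d -> derivable_pt_lim (g1 e) t (g2 e t).
Proof. intros He Ht. destruct (Hg e He) as [_ [_ [[_ [D1 _]] _]]]. apply (Din_interior _ _ d); auto. apply D1. unfold I0; lra. Qed.

Lemma g_der e t : a < e < b -> 0 < t < d -> derivable_pt_lim (g e) t (g1 e t).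
Proof. intros He Ht. destruct (Hg e He) as [_ [_ [[D0 _] _]]]. apply (Din_interior _ _ d); auto. apply D0. unfold I0; lra. Qed.

Lemma g_RC e : a < e < b -> RC (g e).
Proof. intros He. destruct (Hg e He) as [_ [_ [[D0 _] _]]]. apply (cont_RC _ d Hd). eapply Din_cont. apply D0. unfold I0; lra. Qed.

Lemma g1_RC e : a < e < b -> RC (g1 e).
Proof. intros He. destruct (Hg e He) as [_ [_ [[_ [D1 _]] _]]]. apply (cont_RC _ d Hd). eapply Din_cont. apply D1. unfold I0; lra. Qed.

Lemma pe_RC e : a < e < b -> RC (pe g2e e).
Proof. intros He. eapply deriv_RC. apply pe_der; auto. Qed.

Lemma Ge_RC e : a < e < b -> RC (Ge g2e e).
Proof. intros He. eapply deriv_RC. apply Ge_der; auto. Qed.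

Lemma g10 e : a < e < b -> g1 e 0 = 1.
Proof. intros He. apply (g1_0 d (g e) (g1 e) (g2 e)). apply GH; auto. Qed.

Lemma g0 e : a < e < b -> g e 0 = 0.
Proof. intros He. apply (Hg e He). Qed.

Lemma taylor_pe e c eps y : a < e < b -> 0 < y < d ->
  (forall t, 0 < t <= y -> Rabs (g2e e t - c) <= eps) ->
  Rabs (pe g2e e y - c * y) <= eps * y /\ Rabs (Ge g2e e y - c * y ^ 2 / 2) <= eps * y ^ 2.
Proof.
  intros He Hy Hb.
  destruct (two_level (Ge g2e e) (pe g2e e) (g2e e) 0 c eps y) as [T1 T2]; try lra.
  apply Ge0. apply pe0.
  intros t Ht. rewrite <- (Rmax_right 0 t) at 2 by lra. apply Ge_der; auto. lra.
  intros t Ht. rewrite <- (Rmax_right 0 t) at 2 by lra. apply pe_der; auto. lra.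
  apply Ge_RC; auto. apply pe_RC; auto. auto.
  replace (pe g2e e y - 0 - c * y) with (pe g2e e y - c * y) in T1 by ring.
  replace (Ge g2e e y - 0 * y - c * y ^ 2 / 2) with (Ge g2e e y - c * y ^ 2 / 2) in T2 by ring.
  auto.
Qed.

Lemma diff_pe e e' eps y : a < e < b -> a < e' < b -> 0 < y < d ->
  (forall t, 0 < t <= y -> Rabs (g2e e' t - g2e e t) <= eps) ->
  Rabs (pe g2e e' y - pe g2e e y) <= eps * y /\ Rabs (Ge g2e e' y - Ge g2e e y) <= eps * y ^ 2.
Proof.
  intros He He' Hy Hb.
  apply (two_level0 (fun t => Ge g2e e' t - Ge g2e e t) (fun t => pe g2e e' t - pe g2e e t)
           (fun t => g2e e' t - g2e e t)); try lra.
  - rewrite !Ge0. ring.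
  - rewrite !pe0. ring.
  - intros t Ht. apply dpl_minus; rewrite <- (Rmax_right 0 t) at 2 by lra; apply Ge_der; auto; lra.
  - intros t Ht. apply dpl_minus.
    rewrite <- (Rmax_right 0 t) at 2 by lra; apply pe_der; auto; lra.
    rewrite <- (Rmax_right 0 t) at 2 by lra; apply pe_der; auto; lra.
  - apply RC_minus; apply Ge_RC; auto.
  - apply RC_minus; apply pe_RC; auto.
  - auto.
Qed.

Lemma diff_g e e' eps y : a < e < b -> a < e' < b -> 0 < y < d ->
  (forall t, 0 < t <= y -> Rabs (g2 e' t - g2 e t) <= eps) ->
  Rabs (g1 e' y - g1 e y) <= eps * y /\ Rabs (g e' y - g e y) <= eps * y ^ 2.
Proof.
  intros He He' Hy Hb.
  apply (two_level0 (fun t => g e' t - g e t) (fun t => g1 e' t - g1 e t)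
           (fun t => g2 e' t - g2 e t)); try lra.
  - rewrite !g0 by auto. ring.
  - rewrite !g10 by auto. ring.
  - intros t Ht. apply dpl_minus; apply g_der; auto; lra.
  - intros t Ht. apply dpl_minus; apply g1_der; auto; lra.
  - apply RC_minus; apply g_RC; auto.
  - apply RC_minus; apply g1_RC; auto.
  - auto.
Qed.

Variables (e0 r M del0 : R).
Hypothesis Hr : 0 < r.
Hypothesis HEab : a < e0 - r /\ e0 + r < b.
Hypothesis Hdel0 : 0 < del0 <= d.
Hypothesis HM : 0 <= M.
Hypothesis Hbox : forall e t, inE e0 r e -> I0 del0 t -> Rabs (g2e e t) <= M.

Lemma E_ab e : inE e0 r e -> a < e < b.
Proof. unfold inE. lra. Qed.

Lemma mvt_e e e' t : inE e0 r e -> inE e0 r e' -> I0 d t ->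
  exists xi, inE e0 r xi /\ Rabs (xi - e) <= Rabs (e' - e) /\ g2 e' t - g2 e t = g2e xi t * (e' - e).
Proof.
  intros He He' Ht. unfold inE in *.
  destruct (MVT_gen (fun u => g2 u t) e e' (fun u => g2e u t)) as [c [Hc1 Hc2]].
  - intros x Hx. apply is_derive_Reals. apply Hder; auto.
    assert (Rmin e e' >= e0 - r) by (unfold Rmin; destruct Rle_dec; lra).
    assert (Rmax e e' <= e0 + r) by (unfold Rmax; destruct Rle_dec; lra). lra.
  - intros x Hx. eapply deriv_cont. apply Hder; auto.
    assert (Rmin e e' > e0 - r) by (unfold Rmin; destruct Rle_dec; lra).
    assert (Rmax e e' < e0 + r) by (unfold Rmax; destruct Rle_dec; lra). lra.
  - exists c. split; [|split].
    + assert (Rmin e e' > e0 - r) by (unfold Rmin; destruct Rle_dec; lra).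
      assert (Rmax e e' < e0 + r) by (unfold Rmax; destruct Rle_dec; lra). lra.
    + unfold Rmin, Rmax in Hc1. destruct Rle_dec.
      * rewrite !Rabs_pos_eq; lra.
      * rewrite !Rabs_left1; lra.
    + simpl in Hc2. auto.
Qed.

Lemma lip e e' t : inE e0 r e -> inE e0 r e' -> I0 del0 t -> Rabs (g2 e' t - g2 e t) <= M * Rabs (e' - e).
Proof.
  intros He He' Ht. destruct (mvt_e e e' t He He') as [xi [Hxi [Hxe Heq]]].
  { destruct Ht; split; lra. }
  rewrite Heq, Rabs_mult. apply Rmult_le_compat_r. apply Rabs_pos. apply Hbox; auto.
Qed.

Lemma lipg e e' y : inE e0 r e -> inE e0 r e' -> 0 <= y < del0 ->
  Rabs (g1 e' y - g1 e y) <= M * Rabs (e' - e) * y /\ Rabs (g e' y - g e y) <= M * Rabs (e' - e) * y ^ 2.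
Proof.
  intros He He' Hy. destruct (Req_dec y 0) as [E|E].
  - subst. rewrite !g10, !g0 by (apply E_ab; auto). rewrite !Rminus_diag, !Rabs_R0.
    split; simpl; rewrite ?Rmult_0_l, ?Rmult_0_r; lra.
  - apply diff_g; try apply E_ab; auto; try lra.
    intros t Ht. apply lip; auto. split; lra.
Qed.

Lemma unif_g2e e Y : inE e0 r e -> 0 <= Y < del0 -> forall eps, 0 < eps -> exists eta, 0 < eta /\
  forall e' t, inE e0 r e' -> Rabs (e' - e) < eta -> 0 <= t <= Y -> Rabs (g2e e' t - g2e e t) < eps.
Proof.
  intros He HY. apply (unif g2e (inE e0 r) e Y); auto.
  intros t Ht eps Heps. destruct (Hjc e t (E_ab e He) ltac:(split; lra) eps Heps) as [eta [Heta H']].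
  exists eta. split; auto. intros e' t' He' Ht' H1 H2. apply H'; auto. apply E_ab; auto. split; lra.
Qed.

Lemma rem e y : inE e0 r e -> 0 < y < del0 -> forall eps, 0 < eps -> exists eta, 0 < eta /\
  forall e', inE e0 r e' -> Rabs (e' - e) < eta ->
   Rabs (g1 e' y - g1 e y - (e' - e) * pe g2e e y) <= Rabs (e' - e) * eps * y /\
   Rabs (g e' y - g e y - (e' - e) * Ge g2e e y) <= Rabs (e' - e) * eps * y ^ 2.
Proof.
  intros He Hy eps Heps. destruct (unif_g2e e y He ltac:(lra) eps Heps) as [eta [Heta H']].
  exists eta. split; auto. intros e' He' Hee.
  assert (Hea := E_ab e He). assert (Hea' := E_ab e' He').
  set (k := e' - e).
  apply (two_level0 (fun t => g e' t - g e t - k * Ge g2e e t) (fun t => g1 e' t - g1 e t - k * pe g2e e t)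
           (fun t => g2 e' t - g2 e t - k * g2e e t)); try lra.
  - rewrite !g0, Ge0 by auto. ring.
  - rewrite !g10, pe0 by auto. ring.
  - intros t Ht. apply dpl_minus. apply dpl_minus; apply g_der; auto; lra.
    eapply dpl_eql. apply (dpl_mult (fun _ => k) (Ge g2e e)). apply dpl_const. apply Ge_der; auto. lra.
    rewrite Rmax_right by lra. ring.
  - intros t Ht. apply dpl_minus. apply dpl_minus; apply g1_der; auto; lra.
    eapply dpl_eql. apply (dpl_mult (fun _ => k) (pe g2e e)). apply dpl_const. apply pe_der; auto. lra.
    rewrite Rmax_right by lra. ring.
  - apply RC_minus. apply RC_minus; apply g_RC; auto. apply RC_scal. apply Ge_RC; auto.
  - apply RC_minus. apply RC_minus; apply g1_RC; auto. apply RC_scal. apply pe_RC; auto.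
  - intros t Ht. destruct (mvt_e e e' t He He') as [xi [Hxi [Hxe Heq]]].
    { split; lra. }
    rewrite Heq. unfold k. replace (g2e xi t * (e' - e) - (e' - e) * g2e e t) with ((e' - e) * (g2e xi t - g2e e t)) by ring.
    rewrite Rabs_mult. apply Rmult_le_compat_l. apply Rabs_pos. left. apply H'; auto. lra. lra.
Qed.

Lemma rho_pos e : inE e0 r e -> 0 < Rmin (e - (e0 - r)) (e0 + r - e).
Proof. unfold inE. intros. apply Rmin_pos; lra. Qed.

Lemma rho_in e hh : inE e0 r e -> Rabs hh < Rmin (e - (e0 - r)) (e0 + r - e) -> inE e0 r (e + hh).
Proof.
  intros He Hh. assert (H1 := Rmin_l (e - (e0 - r)) (e0 + r - e)).
  assert (H2 := Rmin_r (e - (e0 - r)) (e0 + r - e)). apply Rabs_def2 in Hh. unfold inE in *. lra.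
Qed.

Lemma dg1 e y : inE e0 r e -> I0 del0 y -> derivable_pt_lim (fun e' => g1 e' y) e (pe g2e e y).
Proof.
  intros He Hy eps Heps. assert (Hrho := rho_pos e He).
  destruct (Req_dec y 0) as [E|E].
  - subst. exists (mkposreal _ Hrho). intros hh Hh0 Hhh. simpl in Hhh.
    assert (He' := rho_in e hh He Hhh).
    rewrite !g10 by (apply E_ab; auto). rewrite pe0.
    replace ((1 - 1) / hh - 0) with 0 by (field; auto). rewrite Rabs_R0; auto.
  - destruct Hy as [Hy1 Hy2].
    destruct (rem e y He ltac:(lra) (eps / (y + 1))) as [eta [Heta H']].
    { apply Rdiv_lt_0_compat; lra. }
    assert (Hp : 0 < Rmin eta (Rmin (e - (e0 - r)) (e0 + r - e))) by (apply Rmin_pos; auto).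
    exists (mkposreal _ Hp). intros hh Hh0 Hhh. simpl in Hhh.
    assert (Hm1 := Rmin_l eta (Rmin (e - (e0 - r)) (e0 + r - e))).
    assert (Hm2 := Rmin_r eta (Rmin (e - (e0 - r)) (e0 + r - e))).
    assert (He' := rho_in e hh He ltac:(lra)).
    destruct (H' (e + hh) He' ltac:(replace (e + hh - e) with hh by ring; lra)) as [B _].
    replace (e + hh - e) with hh in B by ring.
    apply (quot_bound _ _ _ (eps / (y + 1) * y)); auto.
    rewrite Rmult_assoc in B. auto.
    apply Rlt_le_trans with (eps / (y + 1) * (y + 1)).
    apply Rmult_lt_compat_l. apply Rdiv_lt_0_compat; lra. lra. right; field; lra.
Qed.

Lemma dw e y : inE e0 r e -> I0 del0 y ->
  derivable_pt_lim (fun e' => wf (g e') (g2 e') y) e (we g2e e y).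
Proof.
  intros He Hy. destruct (Req_dec y 0) as [E|E].
  - subst. apply (dpl_ext (fun e' => g2 e' 0 * / 2)).
    { intros t. rewrite wf_zero. reflexivity. }
    unfold we. destruct (Req_EM_T 0 0) as [_|C]; [|lra].
    eapply dpl_eql. apply (dpl_mult (fun e' => g2 e' 0) (fun _ => / 2)).
    apply Hder. apply E_ab; auto. unfold I0; lra. apply dpl_const. field.
  - intros eps Heps. assert (Hrho := rho_pos e He). destruct Hy as [Hy1 Hy2].
    destruct (rem e y He ltac:(lra) (eps / 2)) as [eta [Heta H']]. lra.
    assert (Hp : 0 < Rmin eta (Rmin (e - (e0 - r)) (e0 + r - e))) by (apply Rmin_pos; auto).
    exists (mkposreal _ Hp). intros hh Hh0 Hhh. simpl in Hhh.
    assert (Hm1 := Rmin_l eta (Rmin (e - (e0 - r)) (e0 + r - e))).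
    assert (Hm2 := Rmin_r eta (Rmin (e - (e0 - r)) (e0 + r - e))).
    assert (He' := rho_in e hh He ltac:(lra)).
    destruct (H' (e + hh) He' ltac:(replace (e + hh - e) with hh by ring; lra)) as [_ B].
    replace (e + hh - e) with hh in B by ring.
    rewrite !wf_pos_eq by auto. unfold we. destruct (Req_EM_T y 0) as [C|_]; [lra|].
    apply (quot_bound _ _ _ (eps / 2)); auto; [|lra].
    replace ((g (e + hh) y - y) * / (y * y) - (g e y - y) * / (y * y) - hh * (Ge g2e e y * / (y * y)))
      with ((g (e + hh) y - g e y - hh * Ge g2e e y) * / (y * y)) by (field; auto).
    rewrite Rabs_mult, (Rabs_pos_eq (/ (y * y))) by (apply Rlt_le, Rinv_0_lt_compat; nra).
    apply Rle_trans with (Rabs hh * (eps / 2) * y ^ 2 * / (y * y)).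
    apply Rmult_le_compat_r; auto. apply Rlt_le, Rinv_0_lt_compat; nra.
    right. field. auto.
Qed.

Lemma dHd e y : inE e0 r e -> I0 del0 y -> 1 + y * wf (g e) (g2 e) y <> 0 ->
  derivable_pt_lim (fun e' => g1 e' y * A y (wf (g e') (g2 e') y)) e
    (pe g2e e y * A y (wf (g e) (g2 e) y) + g1 e y * (A' y (wf (g e) (g2 e) y) * we g2e e y)).
Proof.
  intros He Hy Hne. apply (dpl_mult (fun e' => g1 e' y) (fun e' => A y (wf (g e') (g2 e') y))).
  apply dg1; auto. apply (dpl_comp (fun e' => wf (g e') (g2 e') y) (A y)). apply dw; auto.
  apply A_deriv; auto.
Qed.

Lemma J1 e : inE e0 r e -> forall eps, 0 < eps -> exists eta, 0 < eta /\ eta <= del0 /\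
  forall e' t, inE e0 r e' -> Rabs (e' - e) < eta -> 0 <= t < eta -> Rabs (g2 e' t - g2 e 0) <= eps.
Proof.
  intros He eps Heps.
  destruct (g2_near0 d (g e) (g1 e) (g2 e) (GH e (E_ab e He)) (eps / 2)) as [e1 [He1 [He1d Hb]]]. lra.
  set (eta := Rmin (Rmin e1 del0) (eps / (2 * (M + 1)))).
  assert (Hq : 0 < eps / (2 * (M + 1))) by (apply Rdiv_lt_0_compat; lra).
  assert (Hm1 := Rmin_l (Rmin e1 del0) (eps / (2 * (M + 1)))).
  assert (Hm2 := Rmin_r (Rmin e1 del0) (eps / (2 * (M + 1)))).
  assert (Hm3 := Rmin_l e1 del0). assert (Hm4 := Rmin_r e1 del0).
  assert (Hp : 0 < eta) by (unfold eta; apply Rmin_pos; auto; apply Rmin_pos; lra).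
  exists eta. split; auto. split. unfold eta; lra.
  intros e' t He' Hee Ht.
  assert (L := lip e e' t He He' ltac:(unfold I0, eta in *; lra)).
  assert (L2 : M * Rabs (e' - e) <= eps / 2).
  { apply Rle_trans with ((M + 1) * (eps / (2 * (M + 1)))).
    apply Rmult_le_compat; try lra. apply Rabs_pos. unfold eta in *; lra. right. field. lra. }
  assert (L3 : Rabs (g2 e t - g2 e 0) <= eps / 2).
  { destruct (Req_dec t 0) as [E|E]. subst. rewrite Rminus_diag, Rabs_R0. lra.
    apply Hb. unfold eta in *; lra. }
  replace (g2 e' t - g2 e 0) with ((g2 e' t - g2 e t) + (g2 e t - g2 e 0)) by ring.
  eapply Rle_trans. apply Rabs_triang. lra.
Qed.

Lemma J2 e : inE e0 r e -> forall eps, 0 < eps -> exists eta, 0 < eta /\ eta <= del0 /\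
  forall e' t, inE e0 r e' -> Rabs (e' - e) < eta -> 0 <= t < eta -> Rabs (g2e e' t - g2e e 0) <= eps.
Proof.
  intros He eps Heps.
  destruct (Hjc e 0 (E_ab e He) ltac:(unfold I0; lra) eps Heps) as [eta [Heta H']].
  exists (Rmin eta del0). split. apply Rmin_pos; lra. split. apply Rmin_r.
  intros e' t He' Hee Ht. assert (Hm1 := Rmin_l eta del0). assert (Hm2 := Rmin_r eta del0).
  left. apply H'. apply E_ab; auto. unfold I0; lra. lra. rewrite Rminus_0_r, Rabs_pos_eq; lra.
Qed.

Lemma we_pos_eq e y : y <> 0 -> we g2e e y = Ge g2e e y * / (y * y).
Proof. intros Hy. unfold we. destruct (Req_EM_T y 0); [contradiction | auto]. Qed.

Lemma we_zero e : we g2e e 0 = g2e e 0 / 2.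
Proof. unfold we. destruct (Req_EM_T 0 0); [auto | contradiction]. Qed.

Lemma C_g1 e y : inE e0 r e -> I0 del0 y -> cont2 (inE e0 r) (I0 del0) g1 e y.
Proof.
  intros He Hy eps Heps. assert (Hea := E_ab e He).
  destruct (Req_dec y 0) as [E|E].
  - subst. destruct (J1 e He 1 Rlt_0_1) as [e1 [He1 [He1d Hb]]].
    set (c := g2 e 0).
    assert (Hq : 0 < eps / (Rabs c + 2)) by (apply Rdiv_lt_0_compat; generalize (Rabs_pos c); lra).
    exists (Rmin e1 (eps / (Rabs c + 2))). split. apply Rmin_pos; lra.
    intros e' y' He' Hy' Hee Hyy.
    assert (Hm1 := Rmin_l e1 (eps / (Rabs c + 2))). assert (Hm2 := Rmin_r e1 (eps / (Rabs c + 2))).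
    assert (Hea' := E_ab e' He'). rewrite Rminus_0_r in Hyy. destruct Hy' as [Hy1 Hy2].
    rewrite Rabs_pos_eq in Hyy by lra.
    rewrite (g10 e Hea).
    destruct (Req_dec y' 0) as [E'|E'].
    + subst. rewrite (g10 e' Hea'), Rminus_diag, Rabs_R0. auto.
    + destruct (taylor_g d (g e') (g1 e') (g2 e') c 1 e1 (GH e' Hea') He1 ltac:(lra)) with (y := y') as [T1 _].
      { intros t Ht. apply Hb; auto. lra. lra. }
      lra.
      replace (g1 e' y' - 1) with ((g1 e' y' - 1 - c * y') + c * y') by ring.
      eapply Rle_lt_trans. apply Rabs_triang. rewrite Rabs_mult, (Rabs_pos_eq y') by lra.
      assert ((Rabs c + 1) * y' < eps).
      { apply small_prod; try lra. generalize (Rabs_pos c); lra.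
        apply Rlt_le_trans with (eps / (Rabs c + 2)). lra.
        replace (Rabs c + 1 + 1) with (Rabs c + 2) by ring. lra. }
      lra.
  - destruct Hy as [Hy1 Hy2].
    destruct (cpt_ed (g1 e) y (deriv_cont _ _ _ (g1_der e y Hea ltac:(lra))) (eps / 2)) as [e2 [He2 H2]]. lra.
    assert (Hq : 0 < eps / 2 / (M * del0 + 1)) by (apply Rdiv_lt_0_compat; nra).
    exists (Rmin e2 (eps / 2 / (M * del0 + 1))). split. apply Rmin_pos; lra.
    intros e' y' He' Hy' Hee Hyy.
    assert (Hm1 := Rmin_l e2 (eps / 2 / (M * del0 + 1))). assert (Hm2 := Rmin_r e2 (eps / 2 / (M * del0 + 1))).
    destruct (lipg e e' y' He He' ltac:(destruct Hy'; lra)) as [L _].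
    assert (L2 : M * Rabs (e' - e) * y' < eps / 2).
    { apply Rle_lt_trans with ((M * del0) * Rabs (e' - e)).
      destruct Hy'. assert (0 <= Rabs (e' - e)) by apply Rabs_pos.
      assert (M * Rabs (e' - e) * y' <= M * Rabs (e' - e) * del0) by (apply Rmult_le_compat_l; nra || lra).
      lra.
      apply small_prod; try lra. nra. apply Rabs_pos. }
    assert (L3 := H2 y' ltac:(lra)).
    replace (g1 e' y' - g1 e y) with ((g1 e' y' - g1 e y') + (g1 e y' - g1 e y)) by ring.
    eapply Rle_lt_trans. apply Rabs_triang. lra.
Qed.

Lemma C_wf e y : inE e0 r e -> I0 del0 y -> cont2 (inE e0 r) (I0 del0) (fun e y => wf (g e) (g2 e) y) e y.
Proof.
  intros He Hy eps Heps. assert (Hea := E_ab e He).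
  destruct (Req_dec y 0) as [E|E].
  - subst. destruct (J1 e He (eps / 4)) as [e1 [He1 [He1d Hb]]]. lra.
    set (c := g2 e 0).
    exists e1. split. lra.
    intros e' y' He' Hy' Hee Hyy.
    assert (Hea' := E_ab e' He'). rewrite Rminus_0_r in Hyy. destruct Hy' as [Hy1 Hy2].
    rewrite Rabs_pos_eq in Hyy by lra.
    rewrite (wf_zero (g e)).
    destruct (Req_dec y' 0) as [E'|E'].
    + subst. rewrite wf_zero.
      replace (g2 e' 0 / 2 - g2 e 0 / 2) with ((g2 e' 0 - g2 e 0) * / 2) by field.
      rewrite Rabs_mult, (Rabs_pos_eq (/ 2)) by lra.
      assert (Rabs (g2 e' 0 - g2 e 0) <= eps / 4) by (apply Hb; auto; lra). lra.
    + destruct (taylor_g d (g e') (g1 e') (g2 e') c (eps / 4) e1 (GH e' Hea') He1 ltac:(lra)) with (y := y') as [_ T2].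
      { intros t Ht. apply Hb; auto; lra. }
      lra.
      rewrite wf_pos_eq by auto.
      replace ((g e' y' - y') * / (y' * y') - g2 e 0 / 2) with ((g e' y' - 1 * y' - c * y' ^ 2 / 2) * / (y' * y')) by (unfold c; field; auto).
      apply Rle_lt_trans with (eps / 4). apply div_sq_bound; auto. lra. lra.
  - destruct Hy as [Hy1 Hy2]. assert (Hyp : 0 < y) by lra.
    assert (Hc : continuity_pt (fun t => g e t - t) y).
    { eapply deriv_cont. apply dpl_minus. apply g_der; auto; lra. apply dpl_id. }
    destruct (quot_cont _ y Hyp Hc (eps / 2)) as [e2 [He2 H2]]. lra.
    assert (Hq : 0 < eps / 2 / (M + 1)) by (apply Rdiv_lt_0_compat; lra).
    exists (Rmin (Rmin e2 (y / 2)) (eps / 2 / (M + 1))). split. apply Rmin_pos; [apply Rmin_pos|]; lra.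
    intros e' y' He' Hy' Hee Hyy.
    assert (Hm1 := Rmin_l (Rmin e2 (y / 2)) (eps / 2 / (M + 1))).
    assert (Hm2 := Rmin_r (Rmin e2 (y / 2)) (eps / 2 / (M + 1))).
    assert (Hm3 := Rmin_l e2 (y / 2)). assert (Hm4 := Rmin_r e2 (y / 2)).
    assert (Hy'p : 0 < y') by (apply Rabs_def2 in Hyy; lra).
    destruct (lipg e e' y' He He' ltac:(destruct Hy'; lra)) as [_ L].
    assert (L2 : Rabs ((g e' y' - g e y') * / (y' * y')) <= M * Rabs (e' - e)) by (apply div_sq_bound; auto).
    assert (L3 : M * Rabs (e' - e) < eps / 2) by (apply small_prod; try lra; apply Rabs_pos).
    assert (L4 := H2 y' ltac:(lra)).
    rewrite !wf_pos_eq by lra.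
    replace ((g e' y' - y') * / (y' * y') - (g e y - y) * / (y * y))
      with ((g e' y' - g e y') * / (y' * y') + ((g e y' - y') * / (y' * y') - (g e y - y) * / (y * y))) by (field; lra).
    eapply Rle_lt_trans. apply Rabs_triang. lra.
Qed.

Lemma C_pe e y : inE e0 r e -> I0 del0 y -> cont2 (inE e0 r) (I0 del0) (pe g2e) e y.
Proof.
  intros He Hy eps Heps. assert (Hea := E_ab e He).
  destruct (Req_dec y 0) as [E|E].
  - subst. destruct (J2 e He 1 Rlt_0_1) as [e1 [He1 [He1d Hb]]].
    set (c := g2e e 0).
    assert (Hq : 0 < eps / (Rabs c + 2)) by (apply Rdiv_lt_0_compat; generalize (Rabs_pos c); lra).
    exists (Rmin e1 (eps / (Rabs c + 2))). split. apply Rmin_pos; lra.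
    intros e' y' He' Hy' Hee Hyy.
    assert (Hm1 := Rmin_l e1 (eps / (Rabs c + 2))). assert (Hm2 := Rmin_r e1 (eps / (Rabs c + 2))).
    assert (Hea' := E_ab e' He'). rewrite Rminus_0_r in Hyy. destruct Hy' as [Hy1 Hy2].
    rewrite Rabs_pos_eq in Hyy by lra.
    rewrite (pe0 e).
    destruct (Req_dec y' 0) as [E'|E'].
    + subst. rewrite pe0, Rminus_diag, Rabs_R0. auto.
    + destruct (taylor_pe e' c 1 y' Hea' ltac:(lra)) as [T1 _].
      { intros t Ht. apply Hb; auto; lra. }
      replace (pe g2e e' y' - 0) with ((pe g2e e' y' - c * y') + c * y') by ring.
      eapply Rle_lt_trans. apply Rabs_triang. rewrite Rabs_mult, (Rabs_pos_eq y') by lra.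
      assert ((Rabs c + 1) * y' < eps).
      { apply small_prod; try lra. generalize (Rabs_pos c); lra.
        apply Rlt_le_trans with (eps / (Rabs c + 2)). lra.
        replace (Rabs c + 1 + 1) with (Rabs c + 2) by ring. lra. }
      lra.
  - destruct Hy as [Hy1 Hy2]. assert (Hyp : 0 < y) by lra.
    set (Y := (y + del0) / 2).
    destruct (unif_g2e e Y He ltac:(unfold Y; lra) (eps / 2 / (del0 + 1))) as [e1 [He1 H1]].
    { apply Rdiv_lt_0_compat; lra. }
    destruct (cpt_ed (pe g2e e) y (deriv_cont _ _ _ (pe_der e y Hea ltac:(lra))) (eps / 2)) as [e2 [He2 H2]]. lra.
    exists (Rmin (Rmin e1 e2) (Y - y)). split. apply Rmin_pos; [apply Rmin_pos|]; unfold Y; lra.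
    intros e' y' He' Hy' Hee Hyy.
    assert (Hm1 := Rmin_l (Rmin e1 e2) (Y - y)). assert (Hm2 := Rmin_r (Rmin e1 e2) (Y - y)).
    assert (Hm3 := Rmin_l e1 e2). assert (Hm4 := Rmin_r e1 e2).
    assert (Hea' := E_ab e' He').
    assert (Hyy' := Rabs_def2 _ _ Hyy). destruct Hy' as [Hy'1 Hy'2].
    assert (L1 : Rabs (pe g2e e' y' - pe g2e e y') < eps / 2).
    { destruct (Req_dec y' 0) as [E'|E'].
      - subst. rewrite !pe0, Rminus_diag, Rabs_R0. lra.
      - destruct (diff_pe e e' (eps / 2 / (del0 + 1)) y' Hea Hea' ltac:(lra)) as [D1 _].
        { intros t Ht. left. apply H1; auto. lra. unfold Y in *; lra. }
        assert (Hep : 0 < eps / 2 / (del0 + 1)) by (apply Rdiv_lt_0_compat; lra).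
        assert (X1 : eps / 2 / (del0 + 1) * y' <= eps / 2 / (del0 + 1) * del0) by (apply Rmult_le_compat_l; lra).
        assert (X2 : eps / 2 / (del0 + 1) * del0 < eps / 2 / (del0 + 1) * (del0 + 1)) by (apply Rmult_lt_compat_l; lra).
        replace (eps / 2 / (del0 + 1) * (del0 + 1)) with (eps / 2) in X2 by (field; lra).
        lra. }
    assert (L2 := H2 y' ltac:(lra)).
    replace (pe g2e e' y' - pe g2e e y) with ((pe g2e e' y' - pe g2e e y') + (pe g2e e y' - pe g2e e y)) by ring.
    eapply Rle_lt_trans. apply Rabs_triang. lra.
Qed.

Lemma C_we e y : inE e0 r e -> I0 del0 y -> cont2 (inE e0 r) (I0 del0) (we g2e) e y.
Proof.
  intros He Hy eps Heps. assert (Hea := E_ab e He).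
  destruct (Req_dec y 0) as [E|E].
  - subst. destruct (J2 e He (eps / 4)) as [e1 [He1 [He1d Hb]]]. lra.
    set (c := g2e e 0).
    exists e1. split. lra.
    intros e' y' He' Hy' Hee Hyy.
    assert (Hea' := E_ab e' He'). rewrite Rminus_0_r in Hyy. destruct Hy' as [Hy1 Hy2].
    rewrite Rabs_pos_eq in Hyy by lra.
    rewrite (we_zero e).
    destruct (Req_dec y' 0) as [E'|E'].
    + subst. rewrite we_zero.
      replace (g2e e' 0 / 2 - g2e e 0 / 2) with ((g2e e' 0 - g2e e 0) * / 2) by field.
      rewrite Rabs_mult, (Rabs_pos_eq (/ 2)) by lra.
      assert (Rabs (g2e e' 0 - g2e e 0) <= eps / 4) by (apply Hb; auto; lra). lra.
    + destruct (taylor_pe e' c (eps / 4) y' Hea' ltac:(lra)) as [_ T2].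
      { intros t Ht. apply Hb; auto; lra. }
      rewrite we_pos_eq by auto.
      replace (Ge g2e e' y' * / (y' * y') - g2e e 0 / 2) with ((Ge g2e e' y' - c * y' ^ 2 / 2) * / (y' * y')) by (unfold c; field; auto).
      apply Rle_lt_trans with (eps / 4). apply div_sq_bound; auto. lra. lra.
  - destruct Hy as [Hy1 Hy2]. assert (Hyp : 0 < y) by lra.
    set (Y := (y + del0) / 2).
    destruct (unif_g2e e Y He ltac:(unfold Y; lra) (eps / 4)) as [e1 [He1 H1]]. lra.
    assert (Hc : continuity_pt (Ge g2e e) y).
    { eapply deriv_cont. apply Ge_der; auto; lra. }
    destruct (quot_cont _ y Hyp Hc (eps / 2)) as [e2 [He2 H2]]. lra.
    exists (Rmin (Rmin e1 e2) (Rmin (Y - y) (y / 2))). split.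
    { apply Rmin_pos; apply Rmin_pos; unfold Y; lra. }
    intros e' y' He' Hy' Hee Hyy.
    assert (Hm1 := Rmin_l (Rmin e1 e2) (Rmin (Y - y) (y / 2))). assert (Hm2 := Rmin_r (Rmin e1 e2) (Rmin (Y - y) (y / 2))).
    assert (Hm3 := Rmin_l e1 e2). assert (Hm4 := Rmin_r e1 e2).
    assert (Hm5 := Rmin_l (Y - y) (y / 2)). assert (Hm6 := Rmin_r (Y - y) (y / 2)).
    assert (Hea' := E_ab e' He').
    assert (Hyy' := Rabs_def2 _ _ Hyy). destruct Hy' as [Hy'1 Hy'2].
    assert (Hy'p : 0 < y') by lra.
    destruct (diff_pe e e' (eps / 4) y' Hea Hea' ltac:(lra)) as [_ D2].
    { intros t Ht. left. apply H1; auto. lra. unfold Y in *; lra. }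
    assert (L1 : Rabs ((Ge g2e e' y' - Ge g2e e y') * / (y' * y')) <= eps / 4) by (apply div_sq_bound; auto).
    assert (L2 := H2 y' ltac:(lra)).
    rewrite !we_pos_eq by lra.
    replace (Ge g2e e' y' * / (y' * y') - Ge g2e e y * / (y * y))
      with ((Ge g2e e' y' - Ge g2e e y') * / (y' * y') + (Ge g2e e y' * / (y' * y') - Ge g2e e y * / (y * y))) by (field; lra).
    eapply Rle_lt_trans. apply Rabs_triang. lra.
Qed.

Lemma pos_uniform : exists del, 0 < del <= del0 /\ forall e y, inE e0 r e -> 0 < y < del -> 0 < g e y.
Proof.
  assert (He0 : inE e0 r e0) by (unfold inE; lra).
  assert (Hea0 := E_ab e0 He0).
  set (c0 := g2 e0 0).
  destruct (g2_near0 d (g e0) (g1 e0) (g2 e0) (GH e0 Hea0) 1 Rlt_0_1) as [e1 [He1 [He1d Hb]]].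
  set (K := M * r + 1).
  assert (HK : 1 <= K) by (unfold K; nra).
  set (eta := Rmin e1 del0).
  assert (Heta : 0 < eta) by (unfold eta; apply Rmin_pos; lra).
  assert (Hm1 := Rmin_l e1 del0). assert (Hm2 := Rmin_r e1 del0).
  assert (Hc0 := Rabs_pos c0).
  assert (Hq : 0 < 1 / (Rabs c0 / 2 + K + 1)) by (apply Rdiv_lt_0_compat; lra).
  exists (Rmin eta (1 / (Rabs c0 / 2 + K + 1))). split. split. apply Rmin_pos; lra.
  assert (Hm3 := Rmin_l eta (1 / (Rabs c0 / 2 + K + 1))). unfold eta in *. lra.
  intros e y He Hy.
  assert (Hm3 := Rmin_l eta (1 / (Rabs c0 / 2 + K + 1))).
  assert (Hm4 := Rmin_r eta (1 / (Rabs c0 / 2 + K + 1))).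
  assert (Hea := E_ab e He).
  destruct (taylor_g d (g e) (g1 e) (g2 e) c0 K eta (GH e Hea) Heta ltac:(unfold eta in *; lra)) with (y := y) as [_ T2].
  { intros t Ht.
    assert (L := lip e0 e t He0 He ltac:(unfold eta in *; split; lra)).
    assert (L2 : M * Rabs (e - e0) <= M * r).
    { apply Rmult_le_compat_l; auto. unfold inE in He. apply Rabs_le. lra. }
    assert (L3 : Rabs (g2 e0 t - c0) <= 1) by (apply Hb; unfold eta in *; lra).
    replace (g2 e t - c0) with ((g2 e t - g2 e0 t) + (g2 e0 t - c0)) by ring.
    eapply Rle_trans. apply Rabs_triang. unfold K. lra. }
  lra.
  apply (pos_from_taylor (g e y) y c0 K); try lra. auto.
  assert (y * (Rabs c0 / 2 + K + 1) < 1).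
  { apply Rlt_le_trans with (1 / (Rabs c0 / 2 + K + 1) * (Rabs c0 / 2 + K + 1)).
    apply Rmult_lt_compat_r; lra. right. field. lra. }
  nra.
Qed.

Variable del : R.
Hypothesis Hdel : 0 < del <= del0.
Hypothesis Hpos : forall e y, inE e0 r e -> 0 < y < del -> 0 < g e y.

Lemma map_h e x : I0 (exp (- / del)) x ->
  filterlim (fun z : R * R => (fst z, h (snd z)))
    (within (fun z => inE e0 r (fst z) /\ I0 (exp (- / del)) (snd z)) (locally (e, x)))
    (within (fun z => inE e0 r (fst z) /\ I0 del0 (snd z)) (locally (e, h x))).
Proof.
  intros Hx P [eps HP].
  assert (Hh := within_to_loc _ _ _ _ (h_cont_within del x ltac:(lra) Hx)).
  rewrite <- within_lim in Hh.
  destruct (Hh eps (cond_pos eps)) as [eta [Heta H']].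
  assert (Hp : 0 < Rmin eps eta) by (apply Rmin_pos; auto; apply cond_pos).
  exists (mkposreal _ Hp). intros [e' x'] Hb [He' Hx'].
  simpl in Hb. destruct Hb as [Hb1 Hb2]. change (Rabs (e' - e) < Rmin eps eta) in Hb1.
  change (Rabs (x' - x) < Rmin eps eta) in Hb2.
  assert (Hm1 := Rmin_l eps eta). assert (Hm2 := Rmin_r eps eta).
  apply HP.
  - split. change (Rabs (e' - e) < eps). lra. change (Rabs (h x' - h x) < eps). apply H'; auto. lra.
  - simpl. split; auto. destruct (h_maps del x' ltac:(lra) Hx'). split; lra.
Qed.

Lemma P2_final : exists Hd Hde : R -> R -> R,
  (forall e, e0 - r < e < e0 + r -> C1_on (I0 (exp (- / del))) (conjH (g e)) (Hd e)) /\
  (forall e x, e0 - r < e < e0 + r -> I0 (exp (- / del)) x ->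
     derivable_pt_lim (fun e' => Hd e' x) e (Hde e x)) /\
  joint_cont_on (fun e => e0 - r < e < e0 + r) (I0 (exp (- / del))) Hde.
Proof.
  exists (fun e x => HdF (g e) (g1 e) (g2 e) x).
  exists (fun e x => pe g2e e (h x) * A (h x) (wf (g e) (g2 e) (h x)) +
                     g1 e (h x) * (A' (h x) (wf (g e) (g2 e) (h x)) * we g2e e (h x))).
  split; [|split].
  - intros e He. apply (L1 d (g e) (g1 e) (g2 e) del). apply GH, E_ab; auto. lra. lra.
    intros y Hy. apply Hpos; auto.
  - intros e x He Hx. unfold HdF.
    assert (Hy := h_maps del x ltac:(lra) Hx).
    assert (Hy0 : I0 del0 (h x)) by (destruct Hy; split; lra).
    assert (Hne : 1 + h x * wf (g e) (g2 e) (h x) <> 0).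
    { apply Rgt_not_eq. apply (onep_pos (g e) (g2 e) del); [intros y Hy'; apply Hpos; auto | auto]. }
    exact (dHd e (h x) He Hy0 Hne).
  - intros e x He Hx.
    assert (Hy := h_maps del x ltac:(lra) Hx).
    assert (Hy0 : I0 del0 (h x)) by (destruct Hy; split; lra).
    assert (Hne : 1 + h x * wf (g e) (g2 e) (h x) <> 0).
    { apply Rgt_not_eq. apply (onep_pos (g e) (g2 e) del); [intros y Hy'; apply Hpos; auto | auto]. }
    assert (MP := map_h e x Hx).
    assert (K : forall phi, cont2 (inE e0 r) (I0 del0) phi e (h x) ->
       filterlim (fun z : R * R => phi (fst z) (h (snd z)))
         (within (fun z => inE e0 r (fst z) /\ I0 (exp (- / del)) (snd z)) (locally (e, x)))
         (locally (phi e (h x)))).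
    { intros phi Hphi. apply (filterlim_comp _ _ _ (fun z : R * R => (fst z, h (snd z))) (fun z => phi (fst z) (snd z)) _ _ _ MP).
      apply cont2_filt. auto. }
    assert (Kh : cont2 (inE e0 r) (I0 del0) (fun _ y => y) e (h x)).
    { intros eps Heps. exists eps. split; auto. }
    assert (Fin : filterlim (fun z : R * R => pe g2e (fst z) (h (snd z)) * A (h (snd z)) (wf (g (fst z)) (g2 (fst z)) (h (snd z))) +
                     g1 (fst z) (h (snd z)) * (A' (h (snd z)) (wf (g (fst z)) (g2 (fst z)) (h (snd z))) * we g2e (fst z) (h (snd z))))
         (within (fun z => inE e0 r (fst z) /\ I0 (exp (- / del)) (snd z)) (locally (e, x)))
         (locally (pe g2e e (h x) * A (h x) (wf (g e) (g2 e) (h x)) +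
                     g1 e (h x) * (A' (h x) (wf (g e) (g2 e) (h x)) * we g2e e (h x))))).
    { assert (H1 := K _ (C_pe e (h x) He Hy0)).
      assert (H2 := K _ (C_g1 e (h x) He Hy0)).
      assert (H3 := K _ (C_wf e (h x) He Hy0)).
      assert (H4 := K _ (C_we e (h x) He Hy0)).
      assert (H5 := K _ Kh). simpl in H5.
      apply lim_plus; apply lim_mult; auto.
      apply lim_A; auto. apply lim_mult; auto. apply lim_A'; auto. }
    rewrite <- within2_lim in Fin. simpl in Fin. exact Fin.
Qed.
End P2.


Theorem proposition1 :
  (* Part 1: H is C^1 near 0 (on some [0, d')). *)
  (forall (g : R -> R) (d : R), 0 < d ->
     (forall y, I0 d y -> 0 <= g y) -> g 0 = 0 ->
     (exists g1 g2 : R -> R, C2_on_with (I0 d) g g1 g2) ->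
     bigO_sq (I0 d) g ->
     exists d', 0 < d' /\ exists H' : R -> R, C1_on (I0 d') (conjH g) H')
  /\
  (* Part 2: dependence on a parameter e in the open interval (a, b). *)
  (forall (a b d : R) (g g1 g2 g2e : R -> R -> R), a < b -> 0 < d ->
     (forall e, a < e < b ->
        (forall y, I0 d y -> 0 <= g e y) /\ g e 0 = 0 /\
        C2_on_with (I0 d) (g e) (g1 e) (g2 e) /\ bigO_sq (I0 d) (g e)) ->
     (* g'' is C^1 in e: its e-derivative g2e exists and is jointly continuous *)
     (forall e y, a < e < b -> I0 d y ->
        derivable_pt_lim (fun e' => g2 e' y) e (g2e e y)) ->
     joint_cont_on (fun e => a < e < b) (I0 d) g2e ->
     forall e0, a < e0 < b ->
       exists r d', 0 < r /\ a < e0 - r /\ e0 + r < b /\ 0 < d' /\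
       exists Hd Hde : R -> R -> R,
         (forall e, e0 - r < e < e0 + r -> C1_on (I0 d') (conjH (g e)) (Hd e)) /\
         (forall e x, e0 - r < e < e0 + r -> I0 d' x ->
            derivable_pt_lim (fun e' => Hd e' x) e (Hde e x)) /\
         joint_cont_on (fun e => e0 - r < e < e0 + r) (I0 d') Hde).
Proof.
  split.
  - intros g d Hd Hnn Hg0 [g1 [g2 HC2]] HO.
    assert (HG : Ghyp d g g1 g2) by (unfold Ghyp; auto).
    destruct (g2_near0 d g g1 g2 HG 1 Rlt_0_1) as [eta [Heta [Hed Hb]]].
    set (c := g2 0).
    assert (Hc := Rabs_pos c).
    assert (Hq : 0 < 1 / (Rabs c / 2 + 2)) by (apply Rdiv_lt_0_compat; lra).
    set (del := Rmin eta (1 / (Rabs c / 2 + 2))).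
    assert (Hm1 := Rmin_l eta (1 / (Rabs c / 2 + 2))).
    assert (Hm2 := Rmin_r eta (1 / (Rabs c / 2 + 2))).
    assert (Hdel : 0 < del) by (unfold del; apply Rmin_pos; lra).
    exists (exp (- / del)). split. apply exp_pos.
    exists (HdF g g1 g2). apply (L1 d g g1 g2 del HG Hdel). unfold del; lra.
    intros y Hy.
    destruct (taylor_g d g g1 g2 c 1 eta HG Heta Hed Hb y ltac:(unfold del in *; lra)) as [_ T2].
    apply (pos_from_taylor (g y) y c 1); try lra. auto.
    assert (y * (Rabs c / 2 + 2) < 1).
    { apply Rlt_le_trans with (1 / (Rabs c / 2 + 2) * (Rabs c / 2 + 2)).
      apply Rmult_lt_compat_r; unfold del in *; lra. right. field. lra. }
    nra.
  - intros a b d g g1 g2 g2e Hab Hd Hg Hder Hjc e0 He0.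
    destruct (Hjc e0 0 He0 ltac:(unfold I0; lra) 1 Rlt_0_1) as [eta0 [Heta0 H0]].
    set (r := Rmin eta0 (Rmin (e0 - a) (b - e0)) / 2).
    assert (Hm1 := Rmin_l eta0 (Rmin (e0 - a) (b - e0))).
    assert (Hm2 := Rmin_r eta0 (Rmin (e0 - a) (b - e0))).
    assert (Hm3 := Rmin_l (e0 - a) (b - e0)). assert (Hm4 := Rmin_r (e0 - a) (b - e0)).
    assert (Hr : 0 < r) by (unfold r; assert (0 < Rmin eta0 (Rmin (e0 - a) (b - e0))) by (apply Rmin_pos; [lra | apply Rmin_pos; lra]); lra).
    set (M := Rabs (g2e e0 0) + 1).
    set (del0 := Rmin eta0 d).
    assert (Hm5 := Rmin_l eta0 d). assert (Hm6 := Rmin_r eta0 d).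
    assert (HEab : a < e0 - r /\ e0 + r < b) by (unfold r; split; lra).
    assert (Hdel0 : 0 < del0 <= d) by (unfold del0; split; [apply Rmin_pos|]; lra).
    assert (HM : 0 <= M) by (unfold M; generalize (Rabs_pos (g2e e0 0)); lra).
    assert (Hbox : forall e t, inE e0 r e -> I0 del0 t -> Rabs (g2e e t) <= M).
    { intros e t He [Ht1 Ht2]. unfold inE, r in He.
      assert (B : Rabs (g2e e t - g2e e0 0) < 1).
      { apply H0. lra. unfold I0, del0 in *; lra. apply Rabs_def1; lra.
        rewrite Rminus_0_r, Rabs_pos_eq; unfold del0 in *; lra. }
      unfold M. replace (g2e e t) with ((g2e e t - g2e e0 0) + g2e e0 0) by ring.
      eapply Rle_trans. apply Rabs_triang. lra. }
    destruct (pos_uniform a b d g g1 g2 g2e Hd Hg Hder e0 r M del0 Hr HEab Hdel0 HM Hbox) as [del [Hdel Hpos]].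
    exists r, (exp (- / del)). split; auto. split. lra. split. lra. split. apply exp_pos.
    exact (P2_final a b d g g1 g2 g2e Hd Hg Hder Hjc e0 r M del0 HEab Hdel0 HM Hbox del Hdel Hpos).
Qed.
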